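(* Let $Z_\infty=(X_\infty,Y_\infty)$ be the planar piecewise smooth vector field with $X_\infty(x,y)=(1,2\sin(2\pi x))$ for $y\ge0$ and $Y_\infty(x,y)=(-1,2\sin(2\pi x))$ for $y\le0$, let $P_\infty(x)=\frac{1-\cos(2\pi x)}{\pi}$, and let $\Lambda_\infty=\{(x,P_\infty(x)):x\in\mathbb{R}\}\cup\{(x,-P_\infty(x)):x\in\mathbb{R}\}$. Then $\Lambda_\infty$ is invariant under $Z_\infty$, and the time-one map $\overline{T_1}$ of $Z_\infty$ restricted to $\Lambda_\infty$ (on $(\overline{\Omega}_\infty,\rho_\infty)$ defined below) is topologically conjugate to a subshift over the infinite alphabet $\mathbb{Z}$ inside $\Theta_\infty$: there exist a subshift $K\subset\Theta_\infty$ and a homeomorphism $h:\overline{\Omega}_\infty\to K$ with $h\circ\overline{T_1}=\sigma|_K\circ h$.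
   Context: Switching manifold $\Sigma=\{(x,y):y=0\}=f^{-1}(0)$, $f(x,y)=y$, $\Sigma^\pm=\{\pm y\ge0\}$. A planar PSVF $Z=(X,Y)$ equals the smooth field $X$ on $\Sigma^+$ and $Y$ on $\Sigma^-$. With $Wf=\langle\nabla f,W\rangle$, $W^2f=\langle\nabla(Wf),W\rangle$: crossing region $\Sigma^c=\{Xf\cdot Yf>0\}$ ($\Sigma^{c+}$: both $>0$, $\Sigma^{c-}$: both $<0$), sliding $\Sigma^s=\{Xf<0<Yf\}$, escaping $\Sigma^e=\{Yf<0<Xf\}$. $p\in\Sigma$ with $Xf(p)=0$ is a tangential singularity of $X$; a fold if $X^2f(p)\ne0$, visible if $X^2f(p)>0$, invisible if $<0$; for $Y$ a fold is visible if $Y^2f(p)<0$ (orbit locally in $\Sigma^-$), invisible otherwise. Singular tangency: invisible for both fields; regular otherwise. Sliding field on $\overline{\Sigma^s\cup\Sigma^e}$: $Z^T=(Yf\,X-Xf\,Y)/(Yf-Xf)$. Local trajectories (Filippov convention): off $\Sigma$ follow $X$ or $Y$; through $\Sigma^{c+}$ follow $Y$ for $t\le0$ and $X$ for $t\ge0$ (reversed for $\Sigma^{c-}$); through $\Sigma^e$ follow $Z^T$ for $t\le0$ and one of $X,Y,Z^T$ for $t\ge0$ (reversed for $\Sigma^s$); through a regular tangency one of the flows of $X,Y,Z^T$ for $t\le0$ and one for $t\ge0$; singular tangencies are stationary. A global trajectory is a map $\gamma:\mathbb{R}\to\mathbb{R}^2$ concatenating orientation-preserving local trajectories $\sigma_i$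 on $[t_i,t_{i+1}]$, $i\in\mathbb{Z}$, with $\sigma_i(t_{i+1})=\sigma_{i+1}(t_{i+1})$, $t_i\to\pm\infty$. A set $\Lambda$ is invariant if every global trajectory starting in $\Lambda$ at time $0$ stays in $\Lambda$. Construction: $p_j=j$, $j\in\mathbb{Z}$. $\Omega_\infty$ is the set of global trajectories $\gamma$ of $Z_\infty$ with $\gamma(0)\in\Lambda_\infty$; $T_1(\gamma)(t)=\gamma(t+1)$. Arcs: $I_{2j}=\{(x,P_\infty(x)):j<x<j+1\}$, $I_{2j+1}=\{(x,-P_\infty(x)):j<x<j+1\}$, $j\in\mathbb{Z}$. Itinerary $s(\gamma)\in\mathbb{Z}^{\mathbb{Z}}$: $s(\gamma)_j=n$ if $\gamma(j)\in I_n$, and $s(\gamma)_j=m$ if $\gamma(j)=(p_l,0)$ for some $l$ and $\gamma(j+\frac12)\in I_m$. $\gamma_1\sim\gamma_2$ iff $s(\gamma_1)=s(\gamma_2)$; $\overline{\Omega}_\infty=\Omega_\infty/\sim$. Each class has a representative $\gamma^*$ with $\gamma^*(0)\in\{(p_l,0):l\in\mathbb{Z}\}$; $\rho_\infty(\overline\gamma_1,\overline\gamma_2)=\sum_{i\in\mathbb{Z}}2^{-|i|}d_H(\gamma_1^*([i,i+1]),\gamma_2^*([i,i+1]))$, $d_H$ the Hausdorff distance. $\overline{T_1}(\overline\gamma)=\overline{T_1(\gamma)}$. $\Theta_\infty=\{(x_j)_{j\in\mathbb{Z}}: x_j\in\mathbb{Z},\ |x_{j+1}-x_j|\le2\ \forall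 j\}$ with metric $d(x,y)=\sum_{j\in\mathbb{Z}}|x_j-y_j|/2^{|j|}$ and shift $\sigma((a_j)_j)=(a_{j+1})_j$. A subshift is a closed $\sigma$-invariant subset. *)

(* Defs.v *)
From Stdlib Require Import Reals ZArith ClassicalEpsilon.
From Coquelicot Require Import Coquelicot.
Open Scope R_scope.

Definition pt := (R * R)%type.

(* W f = <grad f, W> = second component of W *)
Definition Wf (W : pt -> pt) (p : pt) : R := snd (W p).

(* W^2 f (p) = <grad (W f)(p), W(p)>, written as the directional derivative of W f
   at p in the direction W(p) (for smooth W). *)
Definition W2f_is (W : pt -> pt) (p : pt) (v : R) : Prop :=
  derivable_pt_lim
    (fun s => Wf W (fst p + s * fst (W p), snd p + s * snd (W p))) 0 v.

Definition inSigma (p : pt) : Prop := snd p = 0.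
Definition inSigmaPlus (p : pt) : Prop := snd p >= 0.
Definition inSigmaMinus (p : pt) : Prop := snd p <= 0.

Definition sliding (X Y : pt -> pt) (p : pt) : Prop :=
  inSigma p /\ Wf X p < 0 < Wf Y p.
Definition escaping (X Y : pt -> pt) (p : pt) : Prop :=
  inSigma p /\ Wf Y p < 0 < Wf X p.

Definition dist2 (p q : pt) : R :=
  sqrt ((fst p - fst q) ^ 2 + (snd p - snd q) ^ 2).

Definition sl_es_closure (X Y : pt -> pt) (p : pt) : Prop :=
  forall eps, eps > 0 -> exists q, (sliding X Y q \/ escaping X Y q) /\ dist2 p q < eps.

Definition ZT (X Y : pt -> pt) (p : pt) : pt :=
  ((Wf Y p * fst (X p) - Wf X p * fst (Y p)) / (Wf Y p - Wf X p),
   (Wf Y p * snd (X p) - Wf X p * snd (Y p)) / (Wf Y p - Wf X p)).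

(* singular tangency: invisible fold for both X and Y *)
Definition singular_tangency (X Y : pt -> pt) (p : pt) : Prop :=
  inSigma p /\ Wf X p = 0 /\ Wf Y p = 0 /\
  (exists v, W2f_is X p v /\ v < 0) /\ (exists v, W2f_is Y p v /\ v > 0).

(* g solves g' = W(g) on [a,b] (interior derivative; continuity is global below) *)
Definition is_solution (W : pt -> pt) (g : R -> pt) (a b : R) : Prop :=
  a < b /\ forall t, a < t < b ->
    derivable_pt_lim (fun s => fst (g s)) t (fst (W (g t))) /\
    derivable_pt_lim (fun s => snd (g s)) t (snd (W (g t))).

(* an orientation-preserving local trajectory (Filippov convention) on [a,b] *)
Definition local_piece (X Y : pt -> pt) (g : R -> pt) (a b : R) : Prop :=
  (is_solution X g a b /\ forall t, a <= t <= b -> inSigmaPlus (g t)) \/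
  (is_solution Y g a b /\ forall t, a <= t <= b -> inSigmaMinus (g t)) \/
  (is_solution (ZT X Y) g a b /\ forall t, a <= t <= b -> sl_es_closure X Y (g t)) \/
  (a < b /\ exists p, singular_tangency X Y p /\ forall t, a <= t <= b -> g t = p).

Definition global_trajectory (X Y : pt -> pt) (g : R -> pt) : Prop :=
  (forall t, continuity_pt (fun s => fst (g s)) t /\ continuity_pt (fun s => snd (g s)) t) /\
  exists tau : Z -> R,
    (forall i, tau i < tau (i + 1)%Z) /\
    (forall M, exists i, tau i > M) /\ (forall M, exists i, tau i < M) /\
    (forall i, local_piece X Y g (tau i) (tau (i + 1)%Z)).

Definition invariant (X Y : pt -> pt) (L : pt -> Prop) : Prop :=
  forall g, global_trajectory X Y g -> L (g 0) -> forall t, L (g t).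

Definition Xinf (p : pt) : pt := (1, 2 * sin (2 * PI * fst p)).
Definition Yinf (p : pt) : pt := (-1, 2 * sin (2 * PI * fst p)).
Definition Pinf (x : R) : R := (1 - cos (2 * PI * x)) / PI.

Definition Lambda_inf (p : pt) : Prop :=
  snd p = Pinf (fst p) \/ snd p = - Pinf (fst p).

(* I_{2j} = {(x,P(x)) : j<x<j+1},  I_{2j+1} = {(x,-P(x)) : j<x<j+1} *)
Definition arc (n : Z) (p : pt) : Prop :=
  IZR (n / 2) < fst p < IZR (n / 2) + 1 /\
  snd p = (if Z.even n then Pinf (fst p) else - Pinf (fst p)).

Definition Omega_inf (g : R -> pt) : Prop :=
  global_trajectory Xinf Yinf g /\ Lambda_inf (g 0).

Definition T1 (g : R -> pt) : R -> pt := fun t => g (t + 1).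

Definition itinerary (g : R -> pt) (s : Z -> Z) : Prop :=
  forall j : Z,
    arc (s j) (g (IZR j)) \/
    (exists l : Z, g (IZR j) = (IZR l, 0) /\ arc (s j) (g (IZR j + / 2))).

Definition itin_equiv (g1 g2 : R -> pt) : Prop :=
  exists s, itinerary g1 s /\ itinerary g2 s.

Definition is_rep (g gs : R -> pt) : Prop :=
  Omega_inf gs /\ itin_equiv gs g /\ exists l : Z, gs 0 = (IZR l, 0).

Definition rep (g : R -> pt) : R -> pt := epsilon (inhabits g) (is_rep g).

Definition dist_pt_set (p : pt) (B : pt -> Prop) : R :=
  real (Glb_Rbar (fun r => exists q, B q /\ r = dist2 p q)).
Definition dH (A B : pt -> Prop) : R :=
  Rmax (real (Lub_Rbar (fun r => exists a, A a /\ r = dist_pt_set a B)))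
       (real (Lub_Rbar (fun r => exists b, B b /\ r = dist_pt_set b A))).

Definition seg (g : R -> pt) (i : Z) : pt -> Prop :=
  fun p => exists t, IZR i <= t <= IZR i + 1 /\ p = g t.

Definition sumZ (a : Z -> R) : R :=
  Series (fun n => a (Z.of_nat n)) + Series (fun n => a (- Z.of_nat (S n))%Z).

Definition rho_inf (g1 g2 : R -> pt) : R :=
  sumZ (fun i => (/ 2) ^ (Z.abs_nat i) * dH (seg (rep g1) i) (seg (rep g2) i)).

Definition Theta_inf (x : Z -> Z) : Prop :=
  forall j, (Z.abs (x (j + 1) - x j) <= 2)%Z.

Definition dTheta (x y : Z -> Z) : R :=
  sumZ (fun j => IZR (Z.abs (x j - y j)) / 2 ^ (Z.abs_nat j)).

Definition sigma_shift (x : Z -> Z) : Z -> Z := fun j => x (j + 1)%Z.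

(* subshift: closed, sigma_shift-invariant (sigma(K) = K) subset of Theta_oo *)
Definition subshift (K : (Z -> Z) -> Prop) : Prop :=
  (forall x, K x -> Theta_inf x) /\
  (forall x, Theta_inf x ->
     (forall eps, eps > 0 -> exists y, K y /\ dTheta x y < eps) -> K x) /\
  (forall x, K x -> K (sigma_shift x)) /\
  (forall x, K x -> exists y, K y /\ sigma_shift y = x).

(* Main.v *)
Require Import Defs.
From Stdlib Require Import Reals ZArith Lra Lia ClassicalEpsilon FunctionalExtensionality.
From Coquelicot Require Import Coquelicot.
Open Scope R_scope.

Lemma PI_bounds : 3 < PI <= 4.
Proof. split; [generalize PI2_3_2; lra | exact PI_4]. Qed.

Lemma P_sin x : Pinf x = 2 * sin (PI * x) ^ 2 / PI.
Proof.
  unfold Pinf. replace (2 * PI * x) with (2 * (PI * x)) by ring.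
  rewrite cos_2a_sin. field. generalize PI_bounds; lra.
Qed.

Lemma P_ge0 x : 0 <= Pinf x.
Proof.
  rewrite P_sin. generalize PI_bounds; intros.
  apply Rmult_le_pos. nra. left; apply Rinv_0_lt_compat; lra.
Qed.

Lemma P_le1 x : Pinf x <= 2 / PI.
Proof.
  unfold Pinf. generalize PI_bounds (COS_bound (2*PI*x)); intros.
  unfold Rdiv. apply Rmult_le_compat_r. left; apply Rinv_0_lt_compat; lra. lra.
Qed.

Lemma twoPI_lt1 : 2 / PI < 1.
Proof.
  generalize PI_bounds; intros. apply (Rmult_lt_reg_r PI). lra.
  unfold Rdiv. rewrite Rmult_assoc, Rinv_l by lra. lra.
Qed.

Lemma twoPI_gt_half : / 2 <= 2 / PI.
Proof.
  generalize PI_bounds; intros. apply (Rmult_le_reg_r PI). lra.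
  unfold Rdiv. rewrite Rmult_assoc, Rinv_l by lra. lra.
Qed.

Lemma P_zero x : Pinf x = 0 -> exists k, x = IZR k.
Proof.
  rewrite P_sin. intros H. generalize PI_bounds; intros.
  assert (sin (PI * x) = 0).
  { assert (sin (PI*x) ^ 2 = 0).
    { apply (Rmult_eq_reg_r (2 / PI)). 2:{ apply Rgt_not_eq. unfold Rdiv; apply Rmult_lt_0_compat; [lra| apply Rinv_0_lt_compat; lra]. }
      rewrite Rmult_0_l. rewrite <- H. field. lra. }
    nra. }
  destruct (sin_eq_0_0 _ H1) as [k Hk]. exists k.
  apply (Rmult_eq_reg_l PI). lra. lra.
Qed.

Lemma P_int k : Pinf (IZR k) = 0.
Proof.
  rewrite P_sin. rewrite sin_eq_0_1. unfold Rdiv. ring.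
  exists k. ring.
Qed.

Lemma P_cos1 x : Pinf x = 0 -> cos (2 * PI * x) = 1.
Proof. unfold Pinf. intros H. generalize PI_bounds; intros.
  assert (1 - cos (2*PI*x) = 0). { apply (Rmult_eq_reg_r (/PI)). rewrite Rmult_0_l. exact H.
  apply Rgt_not_eq, Rinv_0_lt_compat; lra. } lra. Qed.

Lemma not_int_between k x : IZR k < x < IZR k + 1 -> forall l, x <> IZR l.
Proof.
  intros [H1 H2] l E. subst x. rewrite <- plus_IZR in H2.
  apply lt_IZR in H1. apply lt_IZR in H2. lia.
Qed.

Lemma P_pos k x : IZR k < x < IZR k + 1 -> 0 < Pinf x.
Proof.
  intros H. destruct (P_ge0 x) as [|E]; auto.
  symmetry in E. destruct (P_zero _ E) as [l Hl]. exfalso; exact (not_int_between k x H l Hl).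
Qed.

Lemma cos_PI_int k : cos (IZR k * PI) ^ 2 = 1.
Proof.
  generalize (sin2_cos2 (IZR k * PI)). rewrite sin_eq_0_1 by (exists k; ring).
  unfold Rsqr. intros. nra.
Qed.

Lemma P_shift k w : Pinf (IZR k + w) = Pinf w.
Proof.
  rewrite !P_sin. replace (PI * (IZR k + w)) with (IZR k * PI + PI * w) by ring.
  rewrite sin_plus. rewrite (sin_eq_0_1 (IZR k * PI)) by (exists k; ring).
  generalize (cos_PI_int k); intros. 
  replace ((0 * cos (PI * w) + cos (IZR k * PI) * sin (PI * w)) ^ 2) with (cos (IZR k * PI) ^ 2 * sin (PI * w) ^2) by ring.
  rewrite H. rewrite Rmult_1_l. reflexivity.
Qed.

Lemma P_opp w : Pinf (- w) = Pinf w.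
Proof. rewrite !P_sin. replace (PI * - w) with (- (PI * w)) by ring. rewrite sin_neg. f_equal. ring. Qed.

Lemma P_half k : Pinf (IZR k + / 2) = 2 / PI.
Proof.
  rewrite P_shift. rewrite P_sin. replace (PI * /2) with (PI/2) by field. rewrite sin_PI2. field.
  generalize PI_bounds; lra.
Qed.

Definition fl (t : R) : Z := (up t - 1)%Z.

Lemma fl_spec t : IZR (fl t) <= t < IZR (fl t) + 1.
Proof.
  unfold fl. rewrite minus_IZR. destruct (archimed t). lra.
Qed.

Lemma fl_unique z t : IZR z <= t < IZR z + 1 -> fl t = z.
Proof.
  intros [H1 H2]. unfold fl.
  assert (z + 1 = up t)%Z. { apply tech_up; rewrite plus_IZR; lra. }
  lia.
Qed.

Lemma IZR_between_false m z : IZR m < IZR z < IZR m + 1 -> False.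
Proof. intros H. apply (not_int_between m (IZR z) H z). reflexivity. Qed.

Definition posx (a : Z) (u : R) : R :=
  if Z.even a then IZR (a / 2) + u else IZR (a / 2) + 1 - u.
Definition pos (a : Z) (u : R) : pt :=
  (posx a u, if Z.even a then Pinf (posx a u) else - Pinf (posx a u)).

Definition startv (a : Z) : Z := if Z.even a then (a / 2)%Z else (a / 2 + 1)%Z.
Definition endv (a : Z) : Z := if Z.even a then (a / 2 + 1)%Z else (a / 2)%Z.

Definition Kset (s : Z -> Z) : Prop := forall j, endv (s j) = startv (s (j + 1)%Z).

Definition G (s : Z -> Z) (t : R) : pt := pos (s (fl t)) (t - IZR (fl t)).

Lemma pos0 a : pos a 0 = (IZR (startv a), 0).
Proof.
  unfold pos, posx, startv. destruct (Z.even a).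
  - rewrite Rplus_0_r, P_int. reflexivity.
  - rewrite plus_IZR. replace (IZR (a/2) + 1 - 0) with (IZR (a / 2) + 1) by ring.
    rewrite <- plus_IZR, P_int. f_equal; ring.
Qed.

Lemma pos1 a : pos a 1 = (IZR (endv a), 0).
Proof.
  unfold pos, posx, endv. destruct (Z.even a).
  - rewrite plus_IZR, <- plus_IZR, P_int. reflexivity.
  - replace (IZR (a/2) + 1 - 1) with (IZR (a / 2)) by ring.
    rewrite P_int. f_equal; ring.
Qed.

Lemma Z_even_div a : (Z.even a = true -> a = 2 * (a / 2))%Z /\ (Z.even a = false -> a = 2 * (a / 2) + 1)%Z.
Proof.
  generalize (Zmod_even a) (Z.div_mod a 2). intros H1 H2.
  split; intros E; rewrite E in H1; lia.
Qed.

Lemma arc_pos a u : 0 < u < 1 -> arc a (pos a u).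
Proof.
  intros Hu. unfold arc, pos, posx; simpl. destruct (Z.even a); split; try reflexivity; lra.
Qed.

Lemma arc_unique n m p : arc n p -> arc m p -> n = m.
Proof.
  unfold arc. intros [Hn1 Hn2] [Hm1 Hm2].
  assert (n / 2 = m / 2)%Z.
  { destruct (Z.lt_trichotomy (n/2) (m/2)) as [H|[H|H]]; auto; exfalso.
    - assert (n / 2 + 1 <= m / 2)%Z by lia. apply IZR_le in H0. rewrite plus_IZR in H0. lra.
    - assert (m / 2 + 1 <= n / 2)%Z by lia. apply IZR_le in H0. rewrite plus_IZR in H0. lra. }
  assert (Pp : 0 < Pinf (fst p)) by (apply (P_pos (n/2)); lra).
  destruct (Z_even_div n) as [En On]. destruct (Z_even_div m) as [Em Om].
  destruct (Z.even n) eqn:E1, (Z.even m) eqn:E2.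
  - rewrite (En eq_refl), (Em eq_refl). lia.
  - lra.
  - lra.
  - rewrite (On eq_refl), (Om eq_refl). lia.
Qed.

Lemma pos_start_end a a' : endv a = startv a' -> pos a 1 = pos a' 0.
Proof. intros H. rewrite pos1, pos0, H. reflexivity. Qed.

Lemma G_seg s (HK : Kset s) i t : IZR i <= t <= IZR i + 1 -> G s t = pos (s i) (t - IZR i).
Proof.
  intros [H1 H2]. destruct (Rlt_or_le t (IZR i + 1)).
  - unfold G. rewrite (fl_unique i t) by lra. reflexivity.
  - assert (t = IZR i + 1) by lra. subst t. unfold G.
    rewrite (fl_unique (i+1) (IZR i + 1)) by (rewrite plus_IZR; lra).
    replace (IZR i + 1 - IZR i) with 1 by ring. rewrite plus_IZR.
    replace (IZR i + 1 - (IZR i + 1)) with 0 by ring. symmetry; apply pos_start_end. apply HK.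
Qed.

Lemma G_shift1 s t : G s (t + 1) = G (sigma_shift s) t.
Proof.
  unfold G, sigma_shift. destruct (fl_spec t).
  rewrite (fl_unique (fl t + 1) (t+1)) by (rewrite plus_IZR; lra).
  rewrite plus_IZR. f_equal. ring.
Qed.

Lemma pos_Lambda a u : Lambda_inf (pos a u).
Proof. unfold Lambda_inf, pos; simpl. destruct (Z.even a); auto. Qed.
Lemma dl_scal (f : R -> R) t l c : derivable_pt_lim f t l -> derivable_pt_lim (fun s => c * f s) t (c * l).
Proof. intros H. exact (derivable_pt_lim_scal f c t l H). Qed.
Lemma dl_cos (f : R -> R) t l : derivable_pt_lim f t l -> derivable_pt_lim (fun s => cos (f s)) t (- sin (f t) * l).
Proof. intros H. exact (derivable_pt_lim_comp f cos t l _ H (derivable_pt_lim_cos (f t))). Qed.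
Lemma dl_sin (f : R -> R) t l : derivable_pt_lim f t l -> derivable_pt_lim (fun s => sin (f s)) t (cos (f t) * l).
Proof. intros H. exact (derivable_pt_lim_comp f sin t l _ H (derivable_pt_lim_sin (f t))). Qed.
Lemma dl_plus (f g : R -> R) t l1 l2 : derivable_pt_lim f t l1 -> derivable_pt_lim g t l2 -> derivable_pt_lim (fun s => f s + g s) t (l1 + l2).
Proof. intros H1 H2. exact (derivable_pt_lim_plus f g t l1 l2 H1 H2). Qed.
Lemma dl_minus (f g : R -> R) t l1 l2 : derivable_pt_lim f t l1 -> derivable_pt_lim g t l2 -> derivable_pt_lim (fun s => f s - g s) t (l1 - l2).
Proof. intros H1 H2. exact (derivable_pt_lim_minus f g t l1 l2 H1 H2). Qed.
Lemma dl_id t : derivable_pt_lim (fun s => s) t 1.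
Proof. exact (derivable_pt_lim_id t). Qed.
Lemma dl_const c t : derivable_pt_lim (fun _ => c) t 0.
Proof. exact (derivable_pt_lim_const c t). Qed.
Lemma dl_ext (f g : R -> R) t l : (forall s, f s = g s) -> derivable_pt_lim f t l -> derivable_pt_lim g t l.
Proof. intros E H. replace g with f; auto. apply functional_extensionality; auto. Qed.
Lemma dl_eq (f : R -> R) t l l' : l = l' -> derivable_pt_lim f t l -> derivable_pt_lim f t l'.
Proof. intros ->; auto. Qed.

Lemma ct_plus (f g : R -> R) t : continuity_pt f t -> continuity_pt g t -> continuity_pt (fun s => f s + g s) t.
Proof. intros; exact (continuity_pt_plus f g t H H0). Qed.
Lemma ct_minus (f g : R -> R) t : continuity_pt f t -> continuity_pt g t -> continuity_pt (fun s => f s - g s) t.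
Proof. intros; exact (continuity_pt_minus f g t H H0). Qed.
Lemma ct_scal (f : R -> R) c t : continuity_pt f t -> continuity_pt (fun s => c * f s) t.
Proof. intros; exact (continuity_pt_scal f c t H). Qed.
Lemma ct_id t : continuity_pt (fun s => s) t.
Proof. exact (derivable_continuous_pt _ _ (derivable_pt_id t)). Qed.
Lemma ct_const c t : continuity_pt (fun _ => c) t.
Proof. apply continuity_pt_const. intros x y; reflexivity. Qed.
Lemma ct_cos (f : R -> R) t : continuity_pt f t -> continuity_pt (fun s => cos (f s)) t.
Proof. intros H. exact (continuity_pt_comp f cos t H (continuity_cos (f t))). Qed.
Lemma ct_ext (f g : R -> R) t : (forall s, f s = g s) -> continuity_pt f t -> continuity_pt g t.
Proof. intros E H. replace g with f; auto. apply functional_extensionality; auto. Qed.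

Lemma const_deriv0 (f : R -> R) a b :
  (forall t, a < t < b -> derivable_pt_lim f t 0) ->
  (forall t, a <= t <= b -> continuity_pt f t) ->
  forall t, a <= t <= b -> f t = f a.
Proof.
  intros Hd Hc t Ht.
  set (pr := fun x (P : a < x < b) => exist (fun l => derivable_pt_lim f x l) 0 (Hd x P) : derivable_pt f x).
  apply (null_derivative_loc f a b pr Hc); [intros; reflexivity | exact Ht].
Qed.

Definition gcont (g : R -> pt) := forall t, continuity_pt (fun s => fst (g s)) t /\ continuity_pt (fun s => snd (g s)) t.

Lemma X_piece g a b : gcont g -> is_solution Xinf g a b ->
  forall t, a <= t <= b -> fst (g t) - t = fst (g a) - a /\
    snd (g t) + / PI * cos (2 * PI * fst (g t)) = snd (g a) + / PI * cos (2 * PI * fst (g a)).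
Proof.
  intros Hc [Hab Hs] t Ht. split.
  - apply (const_deriv0 (fun s => fst (g s) - s) a b); auto.
    + intros u Hu. destruct (Hs u Hu) as [H1 H2]. unfold Xinf in H1; simpl in H1.
      apply (dl_eq _ _ (1 - 1)). ring. apply dl_minus; auto. apply dl_id.
    + intros u _. apply ct_minus. apply Hc. apply ct_id.
  - apply (const_deriv0 (fun s => snd (g s) + / PI * cos (2 * PI * fst (g s))) a b); auto.
    + intros u Hu. destruct (Hs u Hu) as [H1 H2]. unfold Xinf in H1, H2; simpl in H1, H2.
      eapply dl_eq. 2:{ apply dl_plus. exact H2. apply dl_scal. apply dl_cos. apply dl_scal. exact H1. }
      cbv beta; field. generalize PI_bounds; lra.
    + intros u _. apply ct_plus. apply Hc. apply ct_scal. apply ct_cos. apply ct_scal. apply Hc.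
Qed.

Lemma Y_piece g a b : gcont g -> is_solution Yinf g a b ->
  forall t, a <= t <= b -> fst (g t) + t = fst (g a) + a /\
    snd (g t) - / PI * cos (2 * PI * fst (g t)) = snd (g a) - / PI * cos (2 * PI * fst (g a)).
Proof.
  intros Hc [Hab Hs] t Ht. split.
  - apply (const_deriv0 (fun s => fst (g s) + s) a b); auto.
    + intros u Hu. destruct (Hs u Hu) as [H1 H2]. unfold Yinf in H1; simpl in H1.
      apply (dl_eq _ _ (-1 + 1)). ring. apply dl_plus; auto. apply dl_id.
    + intros u _. apply ct_plus. apply Hc. apply ct_id.
  - apply (const_deriv0 (fun s => snd (g s) - / PI * cos (2 * PI * fst (g s))) a b); auto.
    + intros u Hu. destruct (Hs u Hu) as [H1 H2]. unfold Yinf in H1, H2; simpl in H1, H2.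
      eapply dl_eq. 2:{ apply dl_minus. exact H2. apply dl_scal. apply dl_cos. apply dl_scal. exact H1. }
      cbv beta; field. generalize PI_bounds; lra.
    + intros u _. apply ct_minus. apply Hc. apply ct_scal. apply ct_cos. apply ct_scal. apply Hc.
Qed.

Lemma no_slide p : sl_es_closure Xinf Yinf p -> False.
Proof.
  intros H. destruct (H 1 Rlt_0_1) as [q [[[_ Hq]|[_ Hq]] _]];
  unfold Wf, Xinf, Yinf in Hq; simpl in Hq; lra.
Qed.

Lemma Lam_up p : Lambda_inf p -> snd p >= 0 -> snd p = Pinf (fst p).
Proof. intros [H|H] H'; auto. generalize (P_ge0 (fst p)); lra. Qed.
Lemma Lam_down p : Lambda_inf p -> snd p <= 0 -> snd p = - Pinf (fst p).
Proof. intros [H|H] H'; auto. generalize (P_ge0 (fst p)); lra. Qed.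
Lemma Lam_zero p : Lambda_inf p -> snd p = 0 -> Pinf (fst p) = 0.
Proof. intros [H|H] H'; lra. Qed.

Lemma sing_not_Lambda p : singular_tangency Xinf Yinf p -> Lambda_inf p -> False.
Proof.
  intros [Hs [HX [HY [[v [Hv vneg]] _]]]] HL.
  unfold inSigma in Hs. assert (Hc : cos (2 * PI * fst p) = 1) by (apply P_cos1, Lam_zero; auto).
  unfold W2f_is, Wf, Xinf in Hv; simpl in Hv.
  assert (D : derivable_pt_lim (fun s => 2 * sin (2 * PI * (fst p + s * 1))) 0 (2 * (cos (2 * PI * fst p) * (2 * PI)))).
  { eapply dl_eq. 2:{ apply dl_scal. apply dl_sin. apply dl_scal. apply dl_plus. apply dl_const.
      apply (dl_ext (fun s => s)). intros; ring. apply dl_id. }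
    cbv beta. replace (fst p + 0 * 1) with (fst p) by ring. ring. }
  generalize (uniqueness_limite _ _ _ _ Hv D). rewrite Hc. generalize PI_bounds. lra.
Qed.

Section Tau.
Variable tau : Z -> R.
Hypothesis Hinc : forall i, tau i < tau (i + 1)%Z.
Hypothesis Hup : forall M, exists i, tau i > M.
Hypothesis Hdown : forall M, exists i, tau i < M.

Lemma tau_mono_aux i n : tau i < tau (i + Z.of_nat (S n))%Z.
Proof.
  induction n.
  - replace (i + Z.of_nat 1)%Z with (i + 1)%Z by lia. apply Hinc.
  - replace (i + Z.of_nat (S (S n)))%Z with ((i + Z.of_nat (S n)) + 1)%Z by lia.
    eapply Rlt_trans. exact IHn. apply Hinc.
Qed.

Lemma tau_lt i j : (i < j)%Z -> tau i < tau j.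
Proof.
  intros H. replace j with (i + Z.of_nat (S (Z.to_nat (j - i - 1))))%Z by lia. apply tau_mono_aux.
Qed.

Lemma tau_le i j : (i <= j)%Z -> tau i <= tau j.
Proof.
  intros H. destruct (Z.eq_dec i j). subst; lra. left; apply tau_lt; lia.
Qed.

Lemma locate t : exists i, tau i <= t < tau (i + 1)%Z.
Proof.
  destruct (Hdown t) as [j Hj]. destruct (Hup t) as [k Hk].
  assert (Hjk : (j < k)%Z).
  { destruct (Z_lt_le_dec j k); auto. generalize (tau_le k j l); lra. }
  assert (A : forall n j, tau j <= t -> t < tau (j + Z.of_nat n)%Z -> exists i, tau i <= t < tau (i + 1)%Z).
  { induction n; intros j' H1 H2.
    - replace (j' + Z.of_nat 0)%Z with j' in H2 by lia. lra.
    - destruct (Rlt_or_le t (tau (j' + 1)%Z)).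
      + exists j'; split; auto.
      + apply (IHn (j' + 1)%Z H). replace (j' + 1 + Z.of_nat n)%Z with (j' + Z.of_nat (S n))%Z by lia. exact H2. }
  apply (A (Z.to_nat (k - j)) j). lra. replace (j + Z.of_nat (Z.to_nat (k - j)))%Z with k by lia. lra.
Qed.

Lemma propagate (Sp : R -> Prop) :
  (forall i c, tau i <= c <= tau (i + 1)%Z -> Sp c -> forall s, tau i <= s <= tau (i + 1)%Z -> Sp s) ->
  forall t0, Sp t0 -> forall t, Sp t.
Proof.
  intros Hp t0 H0 t.
  destruct (locate t0) as [i0 Hi0].
  assert (A : forall n : nat, forall s, tau (i0 - Z.of_nat n)%Z <= s <= tau (i0 + 1 + Z.of_nat n)%Z -> Sp s).
  { induction n; intros s Hs.
    - replace (i0 - Z.of_nat 0)%Z with i0 in Hs by lia.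
      replace (i0 + 1 + Z.of_nat 0)%Z with (i0 + 1)%Z in Hs by lia.
      apply (Hp i0 t0); auto. lra.
    - assert (L1 : tau (i0 - Z.of_nat n)%Z <= tau (i0 + 1 + Z.of_nat n)%Z) by (apply tau_le; lia).
      destruct (Rlt_or_le s (tau (i0 - Z.of_nat n)%Z)).
      + apply (Hp (i0 - Z.of_nat (S n))%Z (tau (i0 - Z.of_nat n)%Z)).
        * replace (i0 - Z.of_nat (S n) + 1)%Z with (i0 - Z.of_nat n)%Z by lia.
          split; [left; apply tau_lt; lia | lra].
        * apply IHn. lra.
        * replace (i0 - Z.of_nat (S n) + 1)%Z with (i0 - Z.of_nat n)%Z by lia. lra.
      + destruct (Rle_or_lt s (tau (i0 + 1 + Z.of_nat n)%Z)).
        * apply IHn; lra.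
        * apply (Hp (i0 + 1 + Z.of_nat n)%Z (tau (i0 + 1 + Z.of_nat n)%Z)).
          -- split; [lra | left; apply Hinc].
          -- apply IHn. lra.
          -- replace (i0 + 1 + Z.of_nat n + 1)%Z with (i0 + 1 + Z.of_nat (S n))%Z by lia. lra. }
  destruct (locate t) as [i Hi].
  apply (A (Z.to_nat (Z.abs (i - i0)))).
  split.
  - apply Rle_trans with (tau i); [apply tau_le; lia | lra].
  - apply Rle_trans with (tau (i + 1)%Z); [lra | apply tau_le; lia].
Qed.
End Tau.

Lemma Lambda_piece g a b : gcont g -> local_piece Xinf Yinf g a b ->
  forall c, a <= c <= b -> Lambda_inf (g c) -> forall s, a <= s <= b -> Lambda_inf (g s).
Proof.
  intros Hc Hp c Hcab Hlc s Hs.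
  destruct Hp as [[HX Hpl]|[[HY Hmi]|[[HZ Hcl]|[Hab [p [Hsg Hcst]]]]]].
  - destruct (X_piece g a b Hc HX s Hs) as [_ E1].
    destruct (X_piece g a b Hc HX c Hcab) as [_ E2].
    assert (Ec := Lam_up _ Hlc (Hpl c Hcab)). unfold Pinf in Ec.
    left. unfold Pinf. apply (Rplus_eq_reg_r (/ PI * cos (2 * PI * fst (g s)))).
    rewrite E1, <- E2, Ec. field. generalize PI_bounds; lra.
  - destruct (Y_piece g a b Hc HY s Hs) as [_ E1].
    destruct (Y_piece g a b Hc HY c Hcab) as [_ E2].
    assert (Ec := Lam_down _ Hlc (Hmi c Hcab)). unfold Pinf in Ec.
    right. unfold Pinf. apply (Rplus_eq_reg_r (- / PI * cos (2 * PI * fst (g s)))).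
    replace (snd (g s) + - / PI * cos (2 * PI * fst (g s))) with (snd (g s) - / PI * cos (2 * PI * fst (g s))) by ring.
    rewrite E1, <- E2, Ec. field. generalize PI_bounds; lra.
  - exfalso. exact (no_slide _ (Hcl c Hcab)).
  - exfalso. rewrite (Hcst c Hcab) in Hlc. exact (sing_not_Lambda p Hsg Hlc).
Qed.

Theorem invariance : invariant Xinf Yinf Lambda_inf.
Proof.
  intros g [Hc [tau [Hinc [Hup [Hdown Hp]]]]] H0 t.
  apply (propagate tau Hinc Hup Hdown (fun t => Lambda_inf (g t))) with 0; auto.
  intros i c Hci Hlc s Hs. exact (Lambda_piece g _ _ Hc (Hp i) c Hci Hlc s Hs).
Qed.
Definition Sinv (g : R -> pt) (psi t : R) : Prop :=
  (snd (g t) >= 0 -> exists z, fst (g t) - (t + psi) = IZR z) /\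
  (snd (g t) <= 0 -> exists z, fst (g t) + (t + psi) = IZR z).

Lemma S_piece g psi a b : gcont g -> local_piece Xinf Yinf g a b -> (forall t, Lambda_inf (g t)) ->
  forall c, a <= c <= b -> Sinv g psi c -> forall s, a <= s <= b -> Sinv g psi s.
Proof.
  intros Hc Hp HL c Hcab [S1 S2] s Hs.
  destruct Hp as [[HX Hpl]|[[HY Hmi]|[[HZ Hcl]|[Hab [p [Hsg Hcst]]]]]].
  - destruct (X_piece g a b Hc HX s Hs) as [E1 _].
    destruct (X_piece g a b Hc HX c Hcab) as [E2 _].
    destruct (S1 (Hpl c Hcab)) as [z Hz].
    split.
    + intros _. exists z. rewrite <- Hz. lra.
    + intros Hle. assert (Hy : snd (g s) = 0) by (generalize (Hpl s Hs); unfold inSigmaPlus; lra).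
      destruct (P_zero _ (Lam_zero _ (HL s) Hy)) as [k Hk].
      exists (2 * k - z)%Z. rewrite minus_IZR, mult_IZR. lra.
  - destruct (Y_piece g a b Hc HY s Hs) as [E1 _].
    destruct (Y_piece g a b Hc HY c Hcab) as [E2 _].
    destruct (S2 (Hmi c Hcab)) as [z Hz].
    split.
    + intros Hge. assert (Hy : snd (g s) = 0) by (generalize (Hmi s Hs); unfold inSigmaMinus; lra).
      destruct (P_zero _ (Lam_zero _ (HL s) Hy)) as [k Hk].
      exists (2 * k - z)%Z. rewrite minus_IZR, mult_IZR. lra.
    + intros _. exists z. rewrite <- Hz. lra.
  - exfalso. exact (no_slide _ (Hcl c Hcab)).
  - exfalso. generalize (HL c). rewrite (Hcst c Hcab). exact (sing_not_Lambda p Hsg).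
Qed.

Lemma S_init g : Lambda_inf (g 0) -> exists psi, 0 <= psi < 1 /\ Sinv g psi 0.
Proof.
  intros HL. destruct (Rle_or_lt 0 (snd (g 0))) as [Hy|Hy].
  - exists (fst (g 0) - IZR (fl (fst (g 0)))). destruct (fl_spec (fst (g 0))).
    split; [lra|split].
    + intros _. exists (fl (fst (g 0))). ring.
    + intros Hle. assert (snd (g 0) = 0) by lra.
      destruct (P_zero _ (Lam_zero _ HL H1)) as [k Hk].
      rewrite Hk, (fl_unique k (IZR k)) by lra. exists k. ring.
  - exists (- fst (g 0) - IZR (fl (- fst (g 0)))). destruct (fl_spec (- fst (g 0))).
    split; [lra|split].
    + intros; lra.
    + intros _. exists (Z.opp (fl (- fst (g 0)))). rewrite opp_IZR. ring.
Qed.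

Lemma int_const (f : R -> R) a b : continuity f -> a <= b ->
  (forall t, a <= t <= b -> exists z, f t = IZR z) -> forall t, a <= t <= b -> f t = f a.
Proof.
  intros Hc Hab Hint t Ht.
  destruct (Hint a (conj (Rle_refl a) Hab)) as [za Ha].
  destruct (Hint t Ht) as [zt Hzt].
  destruct (Z.eq_dec za zt) as [E|NE]. { subst. congruence. }
  assert (Hat : a < t).
  { destruct (Rle_lt_or_eq_dec a t) as [|E]; [lra|auto|]. subst t. exfalso. apply NE. apply eq_IZR. congruence. }
  exfalso.
  destruct (Z_lt_le_dec za zt) as [L|L].
  - assert (HL : (za + 1 <= zt)%Z) by lia. apply IZR_le in HL. rewrite plus_IZR in HL.
    destruct (IVT (fun r => f r - (IZR za + / 2)) a t) as [c [Hc1 Hc2]]; auto.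
    + intros x. apply ct_minus. apply Hc. apply ct_const.
    + lra.
    + lra.
    + destruct (Hint c) as [zc Hzc]. lra.
      apply (IZR_between_false za zc). lra.
  - assert (HL : (zt + 1 <= za)%Z) by lia. apply IZR_le in HL. rewrite plus_IZR in HL.
    destruct (IVT (fun r => (IZR za - / 2) - f r) a t) as [c [Hc1 Hc2]]; auto.
    + intros x. apply ct_minus. apply ct_const. apply Hc.
    + lra.
    + lra.
    + destruct (Hint c) as [zc Hzc]. lra.
      apply (IZR_between_false (za - 1) zc). rewrite minus_IZR. lra.
Qed.

Lemma sign_keep (f : R -> R) a b m : continuity f -> a < m < b -> (forall c, a < c < b -> f c <> 0) ->
  f m > 0 -> forall t, a <= t <= b -> f t >= 0.
Proof.
  intros Hc Hm Hnz Hfm t Ht. destruct (Rle_or_lt 0 (f t)) as [|Hft]; [lra|exfalso].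
  destruct (Rlt_or_le t m) as [Htm|Htm].
  - destruct (IVT f t m Hc Htm Hft Hfm) as [c [Hc1 Hc2]].
    assert (c <> t) by (intro; subst; lra). assert (c <> m) by (intro; subst; lra).
    apply (Hnz c); auto; lra.
  - assert (m < t) by (destruct Htm; auto; subst; lra).
    destruct (IVT (fun r => - f r) m t) as [c [Hc1 Hc2]]; auto.
    + intros x. eapply ct_ext. 2: exact (ct_scal f (-1) x (Hc x)). intros; cbv beta; ring.
    + lra. + lra.
    + assert (c <> t) by (intro; subst; lra). assert (c <> m) by (intro; subst; lra).
      apply (Hnz c). lra. lra.
Qed.

Section Repr.
Variable g : R -> pt.
Hypothesis Hc : gcont g.
Hypothesis HL : forall t, Lambda_inf (g t).
Variable psi : R.
Hypothesis HS : forall t, Sinv g psi t.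

Lemma contx : continuity (fun s => fst (g s)).
Proof. intros x; apply Hc. Qed.
Lemma conty : continuity (fun s => snd (g s)).
Proof. intros x; apply Hc. Qed.

Lemma nozero n c : IZR n - psi < c < IZR n - psi + 1 -> snd (g c) <> 0.
Proof.
  intros Hc' Hy. destruct (P_zero _ (Lam_zero _ (HL c) Hy)) as [k Hk].
  destruct (HS c) as [S1 _]. destruct (S1 (Req_ge _ _ Hy)) as [z Hz].
  apply (IZR_between_false n (k - z)). rewrite minus_IZR. lra.
Qed.

Lemma div2_even k : ((2 * k) / 2 = k)%Z.
Proof. rewrite Z.mul_comm. apply Z.div_mul. lia. Qed.
Lemma div2_odd k : ((2 * k + 1) / 2 = k)%Z.
Proof. rewrite Z.mul_comm, Z.div_add_l by lia. change (1 / 2)%Z with 0%Z. lia. Qed.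

Lemma interval_pos n : exists a, forall u, 0 <= u <= 1 -> g (IZR n - psi + u) = pos a u.
Proof.
  set (t0 := IZR n - psi).
  assert (Hnz : forall c, t0 < c < t0 + 1 -> snd (g c) <> 0) by (intros; apply (nozero n); auto).
  assert (Hm : t0 < t0 + / 2 < t0 + 1) by lra.
  destruct (Rlt_or_le 0 (snd (g (t0 + / 2)))) as [Hpos|Hneg].
  - assert (Hy := sign_keep _ t0 (t0 + 1) (t0 + / 2) conty Hm Hnz Hpos).
    assert (Hi := int_const (fun t => fst (g t) - (t + psi)) t0 (t0 + 1)).
    destruct (HS t0) as [S1 _]. destruct (S1 (Hy t0 ltac:(lra))) as [z0 Hz0].
    exists (2 * (n + z0))%Z. intros u Hu.
    assert (Ex : fst (g (t0 + u)) - (t0 + u + psi) = fst (g t0) - (t0 + psi)).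
    { apply (Hi (fun x => ct_minus _ _ x (contx x) (ct_plus _ _ x (ct_id x) (ct_const psi x)))).
      lra. intros t Ht. destruct (HS t) as [S1' _]. apply S1'. apply Hy; auto. lra. }
    unfold pos, posx. rewrite Z.even_even, div2_even.
    assert (Hx : fst (g (t0 + u)) = IZR (n + z0) + u) by (rewrite plus_IZR; unfold t0 in *; lra).
    apply injective_projections; simpl. exact Hx.
    rewrite <- Hx. apply Lam_up. apply HL. apply Hy. lra.
  - assert (Hneg' : snd (g (t0 + / 2)) < 0).
    { destruct Hneg; auto. exfalso. apply (Hnz (t0 + /2)); auto. }
    assert (Hy := sign_keep (fun t => - snd (g t)) t0 (t0 + 1) (t0 + / 2)).
    assert (Hy' : forall t, t0 <= t <= t0 + 1 -> snd (g t) <= 0).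
    { intros t Ht. assert (- snd (g t) >= 0); [|lra]. apply Hy; auto.
      - intros x. eapply ct_ext. 2: exact (ct_scal _ (-1) x (conty x)). intros; cbv beta; ring.
      - intros c Hcc E. apply (Hnz c Hcc). lra.
      - lra. }
    assert (Hi := int_const (fun t => fst (g t) + (t + psi)) t0 (t0 + 1)).
    destruct (HS t0) as [_ S2]. destruct (S2 (Hy' t0 ltac:(lra))) as [z0 Hz0].
    exists (2 * (z0 - n - 1) + 1)%Z. intros u Hu.
    assert (Ex : fst (g (t0 + u)) + (t0 + u + psi) = fst (g t0) + (t0 + psi)).
    { apply (Hi (fun x => ct_plus _ _ x (contx x) (ct_plus _ _ x (ct_id x) (ct_const psi x)))).
      lra. intros t Ht. destruct (HS t) as [_ S2']. apply S2'. apply Hy'; auto. lra. }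
    unfold pos, posx. rewrite Z.even_odd, div2_odd.
    assert (Hx : fst (g (t0 + u)) = IZR (z0 - n - 1) + 1 - u) by (rewrite !minus_IZR; unfold t0 in *; lra).
    apply injective_projections; simpl. exact Hx.
    rewrite <- Hx. apply Lam_down. apply HL. apply Hy'. lra.
Qed.
End Repr.

Theorem repr g : Omega_inf g -> exists s psi, Kset s /\ 0 <= psi < 1 /\ forall t, g t = G s (t + psi).
Proof.
  intros [Hg H0].
  assert (HL : forall t, Lambda_inf (g t)) by (intros; apply (invariance g Hg H0)).
  destruct Hg as [Hc [tau [Hinc [Hup [Hdown Hp]]]]].
  destruct (S_init g H0) as [psi [Hpsi HS0]].
  assert (HS : forall t, Sinv g psi t).
  { apply (propagate tau Hinc Hup Hdown (fun t => Sinv g psi t)) with 0; auto.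
    intros i c Hci Hsc s Hs. exact (S_piece g psi _ _ Hc (Hp i) HL c Hci Hsc s Hs). }
  set (s := fun n => epsilon (inhabits 0%Z) (fun a => forall u, 0 <= u <= 1 -> g (IZR n - psi + u) = pos a u)).
  assert (Hs : forall n u, 0 <= u <= 1 -> g (IZR n - psi + u) = pos (s n) u).
  { intros n. unfold s. apply (epsilon_spec (inhabits 0%Z) (fun a => forall u, 0 <= u <= 1 -> g (IZR n - psi + u) = pos a u)).
    apply (interval_pos g Hc HL psi HS n). }
  exists s, psi. split; [|split; auto].
  - intros j. assert (E1 := Hs j 1 ltac:(lra)). assert (E2 := Hs (j + 1)%Z 0 ltac:(lra)).
    rewrite plus_IZR in E2. replace (IZR j + 1 - psi + 0) with (IZR j - psi + 1) in E2 by ring.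
    rewrite E1, pos1, pos0 in E2. apply (f_equal fst) in E2. simpl in E2. apply eq_IZR. exact E2.
  - intros t. unfold G. destruct (fl_spec (t + psi)).
    replace t with (IZR (fl (t + psi)) - psi + (t + psi - IZR (fl (t + psi)))) at 1 by ring.
    apply Hs. lra.
Qed.
Lemma dl_loc (f g : R -> R) t l d : 0 < d -> (forall r, Rabs (r - t) < d -> f r = g r) ->
  derivable_pt_lim f t l -> derivable_pt_lim g t l.
Proof.
  intros Hd E H eps Heps. destruct (H eps Heps) as [del Hdel].
  assert (Hm : 0 < Rmin del d) by (apply Rmin_pos; [apply cond_pos|auto]).
  exists (mkposreal _ Hm). intros h Hh Hhd. simpl in Hhd.
  rewrite <- (E (t + h)), <- (E t).
  - apply Hdel; auto. apply Rlt_le_trans with (1 := Hhd), Rmin_l.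
  - replace (t - t) with 0 by ring. rewrite Rabs_R0. auto.
  - replace (t + h - t) with h by ring. apply Rlt_le_trans with (1 := Hhd), Rmin_r.
Qed.

Lemma ct_of_dl (f : R -> R) t l : derivable_pt_lim f t l -> continuity_pt f t.
Proof. intros H. apply derivable_continuous_pt. exists l. exact H. Qed.

Lemma ct_glue (f1 f2 g : R -> R) n d : 0 < d -> continuity_pt f1 n -> continuity_pt f2 n ->
  f1 n = g n -> f2 n = g n ->
  (forall r, n - d < r <= n -> g r = f1 r) -> (forall r, n <= r < n + d -> g r = f2 r) ->
  continuity_pt g n.
Proof.
  intros Hd H1 H2 E1 E2 L1 L2.
  unfold continuity_pt, continue_in, limit1_in, limit_in in *. simpl in *. unfold R_dist in *.
  intros eps Heps. destruct (H1 eps Heps) as [a1 [Ha1 Ha1']]. destruct (H2 eps Heps) as [a2 [Ha2 Ha2']].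
  exists (Rmin (Rmin a1 a2) d). split. { apply Rmin_pos; [apply Rmin_pos|]; auto. }
  intros x [Dx Hx].
  assert (Hx1 : Rabs (x - n) < a1) by (eapply Rlt_le_trans; [exact Hx|]; eapply Rle_trans; [apply Rmin_l|apply Rmin_l]).
  assert (Hx2 : Rabs (x - n) < a2) by (eapply Rlt_le_trans; [exact Hx|]; eapply Rle_trans; [apply Rmin_l|apply Rmin_r]).
  assert (Hx3 : Rabs (x - n) < d) by (eapply Rlt_le_trans; [exact Hx|]; apply Rmin_r).
  apply Rabs_def2 in Hx3.
  destruct (Rle_or_lt x n).
  - rewrite L1 by lra. rewrite <- E1. apply Ha1'. split; auto.
  - rewrite L2 by lra. rewrite <- E2. apply Ha2'. split; auto.
Qed.

Lemma P_deriv (f : R -> R) t l : derivable_pt_lim f t l ->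
  derivable_pt_lim (fun r => Pinf (f r)) t (2 * sin (2 * PI * f t) * l).
Proof.
  intros H. apply (dl_ext (fun r => / PI * (1 - cos (2 * PI * f r)))).
  { intros; unfold Pinf, Rdiv; ring. }
  eapply dl_eq. 2:{ apply dl_scal. apply dl_minus. apply dl_const. apply dl_cos. apply dl_scal. exact H. }
  cbv beta. field. generalize PI_bounds; lra.
Qed.

Lemma posx_deriv a c t : derivable_pt_lim (fun r => posx a (r - c)) t (if Z.even a then 1 else -1).
Proof.
  unfold posx. destruct (Z.even a).
  - eapply dl_eq. 2:{ apply dl_plus. apply dl_const. apply dl_minus. apply dl_id. apply dl_const. } ring.
  - eapply dl_eq. 2:{ apply dl_minus. apply dl_const. apply dl_minus. apply dl_id. apply dl_const. } ring.
Qed.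

Lemma posy_deriv a c t : derivable_pt_lim (fun r => snd (pos a (r - c))) t (2 * sin (2 * PI * posx a (t - c))).
Proof.
  unfold pos; simpl. assert (D := posx_deriv a c t). destruct (Z.even a) eqn:E.
  - eapply dl_eq. 2: exact (P_deriv _ _ _ D). cbv beta; ring.
  - apply (dl_ext (fun r => -1 * Pinf (posx a (r - c)))). { intros; ring. }
    eapply dl_eq. 2: apply dl_scal; exact (P_deriv _ _ _ D). cbv beta; ring.
Qed.

Section GS.
Variable s : Z -> Z.
Hypothesis HK : Kset s.

Lemma G_local t : IZR (fl t) < t ->
  forall r, Rabs (r - t) < Rmin (t - IZR (fl t)) (IZR (fl t) + 1 - t) -> pos (s (fl t)) (r - IZR (fl t)) = G s r.
Proof.
  intros Ht r Hr. destruct (fl_spec t).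
  assert (A1 := Rmin_l (t - IZR (fl t)) (IZR (fl t) + 1 - t)).
  assert (A2 := Rmin_r (t - IZR (fl t)) (IZR (fl t) + 1 - t)).
  apply Rabs_def2 in Hr. symmetry. apply G_seg; auto. lra.
Qed.

Lemma G_cont : gcont (G s).
Proof.
  intros t. destruct (fl_spec t) as [F1 F2]. destruct F1 as [F1|F1].
  - assert (Hd : 0 < Rmin (t - IZR (fl t)) (IZR (fl t) + 1 - t)) by (apply Rmin_pos; lra).
    split.
    + apply (ct_of_dl _ _ _ (dl_loc _ _ t _ _ Hd (fun r Hr => f_equal fst (G_local t F1 r Hr)) (posx_deriv (s (fl t)) (IZR (fl t)) t))).
    + apply (ct_of_dl _ _ _ (dl_loc _ _ t _ _ Hd (fun r Hr => f_equal snd (G_local t F1 r Hr)) (posy_deriv (s (fl t)) (IZR (fl t)) t))).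
  - set (n := fl t) in *. rewrite <- F1.
    assert (L1 : forall r, IZR n - 1 < r <= IZR n -> G s r = pos (s (n - 1)%Z) (r - IZR (n - 1))).
    { intros r Hr. apply G_seg; auto. rewrite minus_IZR. lra. }
    assert (L2 : forall r, IZR n <= r < IZR n + 1 -> G s r = pos (s n) (r - IZR n)).
    { intros r Hr. apply G_seg; auto. lra. }
    split.
    + apply (ct_glue (fun r => posx (s (n - 1)%Z) (r - IZR (n - 1))) (fun r => posx (s n) (r - IZR n)) _ _ 1 Rlt_0_1).
      * exact (ct_of_dl _ _ _ (posx_deriv _ _ _)).
      * exact (ct_of_dl _ _ _ (posx_deriv _ _ _)).
      * rewrite L1 by lra. reflexivity.
      * rewrite L2 by lra. reflexivity.
      * intros r Hr. rewrite L1 by lra. reflexivity.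
      * intros r Hr. rewrite L2 by lra. reflexivity.
    + apply (ct_glue (fun r => snd (pos (s (n - 1)%Z) (r - IZR (n - 1)))) (fun r => snd (pos (s n) (r - IZR n))) _ _ 1 Rlt_0_1).
      * exact (ct_of_dl _ _ _ (posy_deriv _ _ _)).
      * exact (ct_of_dl _ _ _ (posy_deriv _ _ _)).
      * rewrite L1 by lra. reflexivity.
      * rewrite L2 by lra. reflexivity.
      * intros r Hr. rewrite L1 by lra. reflexivity.
      * intros r Hr. rewrite L2 by lra. reflexivity.
Qed.

Lemma G_piece i : local_piece Xinf Yinf (G s) (IZR i) (IZR (i + 1)).
Proof.
  rewrite plus_IZR.
  assert (Hin : forall t, IZR i < t < IZR i + 1 -> fl t = i) by (intros; apply fl_unique; lra).
  assert (Hloc : forall t, IZR i < t < IZR i + 1 ->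
     forall r, Rabs (r - t) < Rmin (t - IZR i) (IZR i + 1 - t) -> pos (s i) (r - IZR i) = G s r).
  { intros t Ht. rewrite <- (Hin t Ht). apply G_local. rewrite (Hin t Ht); lra. }
  assert (Hd : forall t, IZR i < t < IZR i + 1 -> 0 < Rmin (t - IZR i) (IZR i + 1 - t)) by (intros; apply Rmin_pos; lra).
  assert (Dx : forall t, IZR i < t < IZR i + 1 -> derivable_pt_lim (fun r => fst (G s r)) t (if Z.even (s i) then 1 else -1)).
  { intros t Ht. exact (dl_loc _ _ t _ _ (Hd t Ht) (fun r Hr => f_equal fst (Hloc t Ht r Hr)) (posx_deriv (s i) (IZR i) t)). }
  assert (Dy : forall t, IZR i < t < IZR i + 1 -> derivable_pt_lim (fun r => snd (G s r)) t (2 * sin (2 * PI * fst (G s t)))).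
  { intros t Ht. rewrite (G_seg s HK i t) by lra. simpl.
    exact (dl_loc _ _ t _ _ (Hd t Ht) (fun r Hr => f_equal snd (Hloc t Ht r Hr)) (posy_deriv (s i) (IZR i) t)). }
  assert (Hseg : forall t, IZR i <= t <= IZR i + 1 -> G s t = pos (s i) (t - IZR i)) by (intros; apply G_seg; auto).
  destruct (Z.even (s i)) eqn:E.
  - left. split.
    + split. lra. intros t Ht. split. unfold Xinf; simpl. exact (Dx t Ht). unfold Xinf; simpl. exact (Dy t Ht).
    + intros t Ht. unfold inSigmaPlus. rewrite Hseg by auto. unfold pos. rewrite E. simpl. generalize (P_ge0 (posx (s i) (t - IZR i))). lra.
  - right; left. split.
    + split. lra. intros t Ht. split. unfold Yinf; simpl. exact (Dx t Ht). unfold Yinf; simpl. exact (Dy t Ht).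
    + intros t Ht. unfold inSigmaMinus. rewrite Hseg by auto. unfold pos. rewrite E. simpl. generalize (P_ge0 (posx (s i) (t - IZR i))). lra.
Qed.

Lemma G_global : global_trajectory Xinf Yinf (G s).
Proof.
  split. exact G_cont.
  exists IZR. split; [|split; [|split]].
  - intros i. apply IZR_lt. lia.
  - intros M. exists (up M). destruct (archimed M); lra.
  - intros M. exists (up M - 2)%Z. rewrite minus_IZR. destruct (archimed M); lra.
  - exact G_piece.
Qed.

Lemma G_Omega : Omega_inf (G s).
Proof. split. exact G_global. unfold G. apply pos_Lambda. Qed.

End GS.

Lemma itin_G s psi g : Kset s -> 0 <= psi < 1 -> (forall t, g t = G s (t + psi)) ->
  itinerary g s /\ forall s', itinerary g s' -> s' = s.
Proof.
  intros HK Hpsi Hg.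
  assert (Gj : forall j, g (IZR j) = pos (s j) psi).
  { intros j. rewrite Hg, (G_seg s HK j) by lra. f_equal. ring. }
  assert (Gh : psi = 0 -> forall j, g (IZR j + / 2) = pos (s j) (/ 2)).
  { intros E j. rewrite Hg, (G_seg s HK j) by lra. f_equal. rewrite E; ring. }
  destruct (Req_dec psi 0) as [E|NE].
  - split.
    + intros j. right. exists (startv (s j)). rewrite Gj, E, pos0. split; auto.
      rewrite (Gh E). apply arc_pos. lra.
    + intros s' Hs'. apply functional_extensionality. intros j.
      destruct (Hs' j) as [A|[l [A B]]].
      * exfalso. rewrite Gj, E, pos0 in A. destruct A as [A _]. simpl in A.
        apply (IZR_between_false (s' j / 2) (startv (s j))). exact A.
      * rewrite (Gh E) in B. apply (arc_unique _ _ _ B). apply arc_pos. lra.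
  - assert (Hp : 0 < psi < 1) by lra.
    split.
    + intros j. left. rewrite Gj. apply arc_pos. auto.
    + intros s' Hs'. apply functional_extensionality. intros j.
      destruct (Hs' j) as [A|[l [A B]]].
      * rewrite Gj in A. apply (arc_unique _ _ _ A). apply arc_pos. auto.
      * exfalso. rewrite Gj in A. destruct (arc_pos (s j) psi Hp) as [C _].
        rewrite A in C. simpl in C. apply (IZR_between_false (s j / 2) l). exact C.
Qed.

Definition hmap (g : R -> pt) : Z -> Z := epsilon (inhabits (fun _ => 0%Z)) (itinerary g).

Lemma hmap_spec s psi g : Kset s -> 0 <= psi < 1 -> (forall t, g t = G s (t + psi)) -> hmap g = s.
Proof.
  intros HK Hp Hg. destruct (itin_G s psi g HK Hp Hg) as [I U].
  apply U. unfold hmap. apply epsilon_spec. exists s. exact I.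
Qed.

Lemma rep_G g s psi : Omega_inf g -> Kset s -> 0 <= psi < 1 -> (forall t, g t = G s (t + psi)) -> rep g = G s.
Proof.
  intros Hg HK Hp Hgs.
  assert (HG0 : forall t, G s t = G s (t + 0)) by (intros; f_equal; ring).
  assert (Hr : is_rep g (rep g)).
  { unfold rep. apply epsilon_spec. exists (G s). split; [apply G_Omega; auto|split].
    - exists s. split. apply (itin_G s 0 (G s) HK ltac:(lra) HG0). apply (itin_G s psi g HK Hp Hgs).
    - exists (startv (s 0%Z)). rewrite (G_seg s HK 0) by lra. rewrite Rminus_0_r. apply pos0. }
  destruct Hr as [Hro [[s0 [I1 I2]] [l Hl]]].
  assert (E0 : s0 = s) by (apply (itin_G s psi g HK Hp Hgs); auto).
  subst s0.
  destruct (repr _ Hro) as [s1 [psi1 [HK1 [Hp1 Hr1]]]].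
  assert (Hpsi1 : psi1 = 0).
  { destruct (Req_dec psi1 0) as [|NE]; auto. exfalso.
    rewrite Hr1 in Hl. rewrite (G_seg s1 HK1 0) in Hl by lra.
    destruct (arc_pos (s1 0%Z) (0 + psi1 - IZR 0)) as [C _]. simpl; lra.
    rewrite Hl in C. simpl in C. exact (IZR_between_false _ _ C). }
  subst psi1.
  assert (E1 : s = s1) by (apply (itin_G s1 0 (rep g) HK1 Hp1 Hr1); auto).
  subst s1. apply functional_extensionality. intros t. rewrite Hr1. f_equal. ring.
Qed.
Lemma ser_geom_ex C q : 0 <= q < 1 -> ex_series (fun n => C * q ^ n).
Proof.
  intros Hq. apply (ex_series_ext (fun n => scal C (q ^ n))). intros; reflexivity.
  apply (@ex_series_scal_l R_AbsRing R_NormedModule C (fun n => q ^ n)). apply ex_series_geom. rewrite Rabs_pos_eq; lra.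
Qed.

Lemma ser_geom_val C q : 0 <= q < 1 -> Series (fun n => C * q ^ n) = C / (1 - q).
Proof.
  intros Hq. rewrite Series_scal_l, Series_geom. unfold Rdiv; ring. rewrite Rabs_pos_eq; lra.
Qed.

Lemma ser_ex (a : nat -> R) C q : 0 <= q < 1 -> (forall n, 0 <= a n <= C * q ^ n) -> ex_series a.
Proof.
  intros Hq H. apply (ex_series_le a (fun n => C * q ^ n)).
  - intros n. change (norm (a n)) with (Rabs (a n)). rewrite Rabs_pos_eq; apply H.
  - apply ser_geom_ex; auto.
Qed.

Lemma ser_zero : Series (fun _ => 0) = 0.
Proof.
  rewrite (Series_ext _ (fun n => 0 * (/ 2) ^ n)) by (intros; ring).
  rewrite Series_scal_l. ring.
Qed.

Lemma ser_nonneg (a : nat -> R) : (forall n, 0 <= a n) -> ex_series a -> 0 <= Series a.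
Proof.
  intros H E. rewrite <- ser_zero. apply Series_le; auto. intros; split; [lra|auto].
Qed.

Lemma ser_term (a : nat -> R) n : (forall k, 0 <= a k) -> ex_series a -> a n <= Series a.
Proof.
  intros H E. rewrite (Series_incr_n a (S n)) by (auto || lia).
  simpl pred. assert (a n <= sum_f_R0 a n).
  { destruct n. simpl; lra. simpl. generalize (cond_pos_sum a n H). lra. }
  assert (0 <= Series (fun k => a (S n + k)%nat)).
  { apply ser_nonneg. auto. apply (ex_series_incr_n a (S n)). auto. }
  lra.
Qed.

Lemma sum_zero (a : nat -> R) m : (forall k, (k <= m)%nat -> a k = 0) -> sum_f_R0 a m = 0.
Proof.
  induction m; intros H; simpl. apply H; lia. rewrite IHm, H by (auto || intros; apply H; lia). ring.
Qed.

Lemma ser_tail (a : nat -> R) C q N : 0 <= q < 1 -> (forall n, 0 <= a n <= C * q ^ n) ->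
  (forall n, (n < N)%nat -> a n = 0) -> Series a <= C * q ^ N / (1 - q).
Proof.
  intros Hq H Z0. assert (E := ser_ex a C q Hq H).
  destruct N.
  - simpl. rewrite Rmult_1_r, <- ser_geom_val by auto. apply Series_le; auto. apply ser_geom_ex; auto.
  - rewrite (Series_incr_n a (S N)) by (auto || lia). simpl pred.
    rewrite sum_zero by (intros; apply Z0; lia). rewrite Rplus_0_l.
    rewrite <- ser_geom_val by auto. apply Series_le.
    + intros n. split. apply H. rewrite Rmult_assoc, <- pow_add. apply H.
    + apply ser_geom_ex; auto.
Qed.

Lemma lin_le_geom n : INR (S n) <= 2 * (3 / 2) ^ n.
Proof.
  induction n. simpl; lra.
  assert (X1 : 1 <= (3 / 2) ^ n) by (apply pow_R1_Rle; lra).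
  rewrite S_INR. change ((3 / 2) ^ S n) with (3 / 2 * (3 / 2) ^ n). nra.
Qed.

Lemma lin_geom n : INR (S n) * (/ 2) ^ n <= 2 * (3 / 4) ^ n.
Proof.
  replace (3 / 4) with (3 / 2 * / 2) by field. rewrite Rpow_mult_distr.
  assert (0 < (/ 2) ^ n) by (apply pow_lt; lra).
  generalize (lin_le_geom n). nra.
Qed.

Lemma sumZ_tools (a : Z -> R) C : 0 <= C ->
  (forall i, 0 <= a i <= C * INR (S (Z.abs_nat i)) * (/ 2) ^ (Z.abs_nat i)) ->
  (forall i, a i <= sumZ a) /\
  (forall N, (forall i, (Z.abs_nat i <= N)%nat -> a i = 0) -> sumZ a <= 16 * C * (3 / 4) ^ N).
Proof.
  intros HC H.
  set (p := fun n => a (Z.of_nat n)). set (m := fun n => a (- Z.of_nat (S n))%Z).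
  assert (Hq : 0 <= 3 / 4 < 1) by lra.
  assert (Bp : forall n, 0 <= p n <= 2 * C * (3 / 4) ^ n).
  { intros n. unfold p. destruct (H (Z.of_nat n)) as [H1 H2]. rewrite Zabs2Nat.id in H2.
    split; auto. generalize (lin_geom n). intros. rewrite Rmult_assoc in H2.
    eapply Rle_trans. exact H2. replace (2 * C * (3 / 4) ^ n) with (C * (2 * (3 / 4) ^ n)) by ring.
    apply Rmult_le_compat_l; auto. }
  assert (Bm : forall n, 0 <= m n <= 2 * C * (3 / 4) ^ n).
  { intros n. unfold m. destruct (H (- Z.of_nat (S n))%Z) as [H1 H2].
    replace (Z.abs_nat (- Z.of_nat (S n))) with (S n) in H2 by lia.
    split; auto. generalize (lin_geom n). intros. rewrite Rmult_assoc in H2.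
    eapply Rle_trans. exact H2. replace (2 * C * (3 / 4) ^ n) with (C * (2 * (3 / 4) ^ n)) by ring.
    apply Rmult_le_compat_l; auto.
    rewrite !S_INR. simpl pow. rewrite S_INR in H0. assert (0 <= INR n) by apply pos_INR.
    assert (0 < (/ 2) ^ n) by (apply pow_lt; lra). nra. }
  assert (Ep := ser_ex p _ _ Hq Bp). assert (Em := ser_ex m _ _ Hq Bm).
  assert (Np : 0 <= Series p) by (apply ser_nonneg; auto; apply Bp).
  assert (Nm : 0 <= Series m) by (apply ser_nonneg; auto; apply Bm).
  unfold sumZ. fold p. fold m. split.
  - intros i. destruct (Z_lt_le_dec i 0) as [L|L].
    + replace i with (- Z.of_nat (S (Z.to_nat (- i - 1))))%Z by lia.
      change (a (- Z.of_nat (S (Z.to_nat (- i - 1))))%Z) with (m (Z.to_nat (- i - 1))).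
      generalize (ser_term m (Z.to_nat (- i - 1)) (fun k => proj1 (Bm k)) Em). lra.
    + replace i with (Z.of_nat (Z.to_nat i)) by lia.
      change (a (Z.of_nat (Z.to_nat i))) with (p (Z.to_nat i)).
      generalize (ser_term p (Z.to_nat i) (fun k => proj1 (Bp k)) Ep). lra.
  - intros N HZ.
    assert (Sp : Series p <= 2 * C * (3 / 4) ^ N / (1 - 3 / 4)).
    { apply ser_tail; auto. intros n Hn. unfold p. apply HZ. rewrite Zabs2Nat.id. lia. }
    assert (Sm : Series m <= 2 * C * (3 / 4) ^ N / (1 - 3 / 4)).
    { apply ser_tail; auto. intros n Hn. unfold m. apply HZ. lia. }
    replace (2 * C * (3 / 4) ^ N / (1 - 3 / 4)) with (8 * C * (3 / 4) ^ N) in Sp, Sm by field.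
    lra.
Qed.
Lemma dist2_ge0 p q : 0 <= dist2 p q.
Proof. apply sqrt_pos. Qed.

Lemma dist2_refl p : dist2 p p = 0.
Proof. unfold dist2. replace ((fst p - fst p) ^ 2 + (snd p - snd p) ^ 2) with 0 by ring. apply sqrt_0. Qed.

Lemma dist2_le p q : dist2 p q <= Rabs (fst p - fst q) + Rabs (snd p - snd q).
Proof.
  unfold dist2. set (a := fst p - fst q). set (b := snd p - snd q).
  rewrite <- (sqrt_pow2 (Rabs a + Rabs b)) by (generalize (Rabs_pos a) (Rabs_pos b); lra).
  apply sqrt_le_1_alt. rewrite <- (pow2_abs a), <- (pow2_abs b).
  generalize (Rabs_pos a) (Rabs_pos b). nra.
Qed.

Lemma dist2_gex p q : Rabs (fst p - fst q) <= dist2 p q.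
Proof.
  unfold dist2. rewrite <- (sqrt_pow2 (Rabs (fst p - fst q))) by apply Rabs_pos.
  apply sqrt_le_1_alt. rewrite pow2_abs. generalize (pow2_ge_0 (snd p - snd q)). lra.
Qed.

Lemma dist2_gey p q : Rabs (snd p - snd q) <= dist2 p q.
Proof.
  unfold dist2. rewrite <- (sqrt_pow2 (Rabs (snd p - snd q))) by apply Rabs_pos.
  apply sqrt_le_1_alt. rewrite pow2_abs. generalize (pow2_ge_0 (fst p - fst q)). lra.
Qed.

Lemma glb_fin (E : R -> Prop) lo x : E x -> (forall y, E y -> lo <= y) ->
  lo <= real (Glb_Rbar E) /\ real (Glb_Rbar E) <= x.
Proof.
  intros Hx Hlo. destruct (Glb_Rbar_correct E) as [Hlb Hg].
  assert (A := Hlb x Hx). assert (B := Hg (Finite lo) Hlo).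
  destruct (Glb_Rbar E); simpl in *; try contradiction; lra.
Qed.

Lemma lub_fin (E : R -> Prop) x hi : E x -> (forall y, E y -> y <= hi) ->
  x <= real (Lub_Rbar E) /\ real (Lub_Rbar E) <= hi.
Proof.
  intros Hx Hhi. destruct (Lub_Rbar_correct E) as [Hub Hl].
  assert (A := Hub x Hx). assert (B := Hl (Finite hi) Hhi).
  destruct (Lub_Rbar E); simpl in *; try contradiction; lra.
Qed.

Lemma dps_bounds a B b : B b -> 0 <= dist_pt_set a B <= dist2 a b.
Proof.
  intros Hb. unfold dist_pt_set. apply glb_fin. exists b; auto.
  intros y [q [_ ->]]. apply dist2_ge0.
Qed.

Lemma dps_ge a B b c : B b -> (forall q, B q -> c <= dist2 a q) -> c <= dist_pt_set a B.
Proof.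
  intros Hb H. unfold dist_pt_set. apply (glb_fin _ c (dist2 a b)). exists b; auto.
  intros y [q [Hq ->]]. auto.
Qed.

Section DH.
Variables A B : pt -> Prop.
Variables a0 b0 : pt.
Hypothesis Ha0 : A a0.
Hypothesis Hb0 : B b0.
Variable M : R.
Hypothesis HM : forall a b, A a -> B b -> dist2 a b <= M /\ dist2 b a <= M.

Lemma dH_parts : (forall a, A a -> dist_pt_set a B <= real (Lub_Rbar (fun r => exists a, A a /\ r = dist_pt_set a B))) /\
  0 <= real (Lub_Rbar (fun r => exists a, A a /\ r = dist_pt_set a B)) /\
  0 <= real (Lub_Rbar (fun r => exists b, B b /\ r = dist_pt_set b A)).
Proof.
  split; [|split].
  - intros a Ha. apply (lub_fin _ _ M). exists a; auto.
    intros y [a' [Ha' ->]]. destruct (dps_bounds a' B b0 Hb0). destruct (HM a' b0 Ha' Hb0). lra.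
  - destruct (dps_bounds a0 B b0 Hb0).
    assert (dist_pt_set a0 B <= real (Lub_Rbar (fun r => exists a, A a /\ r = dist_pt_set a B))); [|lra].
    apply (lub_fin _ _ M). exists a0; auto.
    intros y [a' [Ha' ->]]. destruct (dps_bounds a' B b0 Hb0). destruct (HM a' b0 Ha' Hb0). lra.
  - destruct (dps_bounds b0 A a0 Ha0).
    assert (dist_pt_set b0 A <= real (Lub_Rbar (fun r => exists b, B b /\ r = dist_pt_set b A))); [|lra].
    apply (lub_fin _ _ M). exists b0; auto.
    intros y [b' [Hb' ->]]. destruct (dps_bounds b' A a0 Ha0). destruct (HM a0 b' Ha0 Hb'). lra.
Qed.

Lemma dH_nonneg : 0 <= dH A B.
Proof. unfold dH. destruct dH_parts as [_ [H1 _]]. eapply Rle_trans. exact H1. apply Rmax_l. Qed.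

Lemma dH_lower a c : A a -> (forall b, B b -> c <= dist2 a b) -> c <= dH A B.
Proof.
  intros Ha H. unfold dH. destruct dH_parts as [H1 _].
  eapply Rle_trans. apply (dps_ge a B b0 c Hb0 H). eapply Rle_trans. apply (H1 a Ha). apply Rmax_l.
Qed.
End DH.

Lemma dH_upper A B a0 b0 e : A a0 -> B b0 ->
  (forall a, A a -> exists b, B b /\ dist2 a b <= e) ->
  (forall b, B b -> exists a, A a /\ dist2 b a <= e) -> dH A B <= e.
Proof.
  intros Ha0 Hb0 H1 H2. unfold dH. apply Rmax_lub.
  - destruct (H1 a0 Ha0) as [b [Hb Hd]].
    destruct (dps_bounds a0 B b Hb).
    apply (lub_fin _ (dist_pt_set a0 B)). exists a0; auto.
    intros y [a [Ha ->]]. destruct (H1 a Ha) as [b' [Hb' Hd']]. destruct (dps_bounds a B b' Hb'). lra.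
  - destruct (H2 b0 Hb0) as [a [Ha Hd]].
    apply (lub_fin _ (dist_pt_set b0 A)). exists b0; auto.
    intros y [b [Hb ->]]. destruct (H2 b Hb) as [a' [Ha' Hd']]. destruct (dps_bounds b A a' Ha'). lra.
Qed.
Lemma start_rel a : (a = 2 * startv a \/ a = 2 * startv a - 1)%Z.
Proof. unfold startv. destruct (Z_even_div a) as [E O]. destruct (Z.even a); [left; auto | right; rewrite (O eq_refl) at 1; lia]. Qed.
Lemma end_rel a : (a = 2 * endv a - 2 \/ a = 2 * endv a + 1)%Z.
Proof. unfold endv. destruct (Z_even_div a) as [E O]. destruct (Z.even a); [left; rewrite (E eq_refl) at 1; lia | right; auto]. Qed.
Lemma end_start a : (Z.abs (endv a - startv a) = 1)%Z.
Proof. unfold endv, startv. destruct (Z.even a); lia. Qed.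

Lemma K_theta s : Kset s -> Theta_inf s.
Proof.
  intros HK j. generalize (HK j) (end_rel (s j)) (start_rel (s (j + 1)%Z)). lia.
Qed.

Lemma drift (f : Z -> Z) c : (forall j, Z.abs (f (j + 1) - f j) <= c)%Z -> forall j, (Z.abs (f j - f 0) <= c * Z.abs j)%Z.
Proof.
  intros H j. destruct (Z_lt_le_dec j 0) as [L|L].
  - replace j with (- Z.of_nat (Z.to_nat (- j)))%Z by lia. generalize (Z.to_nat (- j)). intros n.
    induction n. simpl. lia.
    generalize (H (- Z.of_nat (S n))%Z). replace (- Z.of_nat (S n) + 1)%Z with (- Z.of_nat n)%Z by lia.
    replace (Z.abs (- Z.of_nat (S n))) with (Z.abs (- Z.of_nat n) + 1)%Z by lia. rewrite Z.mul_add_distr_l. lia.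
  - replace j with (Z.of_nat (Z.to_nat j)) by lia. generalize (Z.to_nat j). intros n.
    induction n. simpl. lia.
    generalize (H (Z.of_nat n)). replace (Z.of_nat n + 1)%Z with (Z.of_nat (S n)) by lia.
    replace (Z.abs (Z.of_nat (S n))) with (Z.abs (Z.of_nat n) + 1)%Z by lia. rewrite Z.mul_add_distr_l. lia.
Qed.

Lemma start_drift s : Kset s -> forall j, (Z.abs (startv (s j) - startv (s 0%Z)) <= Z.abs j)%Z.
Proof.
  intros HK j. generalize (drift (fun j => startv (s j)) 1). intros D.
  assert (Z.abs (startv (s j) - startv (s 0%Z)) <= 1 * Z.abs j)%Z; [|lia].
  apply D. intros k. rewrite <- (HK k). generalize (end_start (s k)). lia.
Qed.

Lemma IZR_abs_nat i : IZR (Z.abs i) = INR (Z.abs_nat i).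
Proof. rewrite INR_IZR_INZ, Zabs2Nat.id_abs. reflexivity. Qed.

Lemma posx_start a u : 0 <= u <= 1 -> Rabs (posx a u - IZR (startv a)) <= 1.
Proof.
  intros Hu. unfold posx, startv. destruct (Z.even a); rewrite ?plus_IZR; apply Rabs_le; lra.
Qed.

Lemma G_fst_bound s i t : Kset s -> IZR i <= t <= IZR i + 1 ->
  Rabs (fst (G s t) - IZR (startv (s 0%Z))) <= IZR (Z.abs i) + 1.
Proof.
  intros HK Ht. rewrite (G_seg s HK i t Ht). simpl.
  generalize (start_drift s HK i). intros D. apply IZR_le in D.
  rewrite abs_IZR, minus_IZR in D.
  generalize (posx_start (s i) (t - IZR i) ltac:(lra)). intros P1.
  replace (posx (s i) (t - IZR i) - IZR (startv (s 0%Z))) with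
    ((posx (s i) (t - IZR i) - IZR (startv (s i))) + (IZR (startv (s i)) - IZR (startv (s 0%Z)))) by ring.
  eapply Rle_trans. apply Rabs_triang. lra.
Qed.

Lemma pos_snd_bound a u : Rabs (snd (pos a u)) <= 1.
Proof.
  unfold pos; simpl. generalize (P_ge0 (posx a u)) (P_le1 (posx a u)) twoPI_lt1. intros.
  destruct (Z.even a); apply Rabs_le; lra.
Qed.

Lemma G_snd_bound s t : Rabs (snd (G s t)) <= 1.
Proof. apply pos_snd_bound. Qed.

Lemma posx_half a : posx a (/ 2) = IZR (a / 2) + / 2.
Proof. unfold posx. destruct (Z.even a); lra. Qed.

Lemma posx_range a u : 0 <= u <= 1 -> IZR (a / 2) <= posx a u <= IZR (a / 2) + 1.
Proof. intros. unfold posx. destruct (Z.even a); lra. Qed.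

Lemma pos_sep a a' u : a <> a' -> 0 <= u <= 1 -> / 2 <= dist2 (pos a (/ 2)) (pos a' u).
Proof.
  intros Ha Hu. destruct (Z.eq_dec (a / 2) (a' / 2)) as [E|NE].
  - eapply Rle_trans. 2: apply dist2_gey.
    assert (Hp : Pinf (posx a (/ 2)) = 2 / PI) by (rewrite posx_half; apply P_half).
    generalize (P_ge0 (posx a' u)) twoPI_gt_half. intros.
    destruct (Z_even_div a) as [Ea Oa]. destruct (Z_even_div a') as [Ea' Oa'].
    unfold pos; simpl. destruct (Z.even a) eqn:E1, (Z.even a') eqn:E2.
    + exfalso. apply Ha. rewrite (Ea eq_refl), (Ea' eq_refl), E. reflexivity.
    + rewrite Hp. rewrite Rabs_pos_eq; lra.
    + rewrite Hp. rewrite Rabs_left1; lra.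
    + exfalso. apply Ha. rewrite (Oa eq_refl), (Oa' eq_refl), E. reflexivity.
  - eapply Rle_trans. 2: apply dist2_gex. simpl. rewrite posx_half.
    generalize (posx_range a' u Hu). intros.
    destruct (Z_lt_le_dec (a / 2) (a' / 2)) as [L|L].
    + assert (a / 2 + 1 <= a' / 2)%Z by lia. apply IZR_le in H0. rewrite plus_IZR in H0.
      rewrite Rabs_left1; lra.
    + assert (a' / 2 + 1 <= a / 2)%Z by lia. apply IZR_le in H0. rewrite plus_IZR in H0.
      rewrite Rabs_pos_eq; lra.
Qed.

Lemma half_pow_le1 m : (/ 2) ^ m <= 1.
Proof. induction m; simpl. lra. assert (0 < (/2) ^ m) by (apply pow_lt; lra). nra. Qed.

Lemma half_pow_mono k N : (k <= N)%nat -> (/ 2) ^ N <= (/ 2) ^ k.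
Proof.
  intros H. replace N with (k + (N - k))%nat by lia. rewrite pow_add.
  assert (0 < (/2) ^ k) by (apply pow_lt; lra). generalize (half_pow_le1 (N - k)). nra.
Qed.

Lemma dist2_sym p q : dist2 p q = dist2 q p.
Proof. unfold dist2. f_equal. ring. Qed.

Lemma tri3 (x y z w : R) : Rabs (x - y) <= Rabs (x - z) + Rabs (z - w) + Rabs (w - y).
Proof.
  eapply Rle_trans. 2: apply Rplus_le_compat_r; apply Rabs_triang.
  eapply Rle_trans. 2: apply Rabs_triang. right; f_equal; ring.
Qed.

Lemma tri2 (x y : R) : Rabs (x - y) <= Rabs x + Rabs y.
Proof. unfold Rminus. eapply Rle_trans. apply Rabs_triang. rewrite Rabs_Ropp. lra. Qed.

Lemma G_pair_bound s s' i t t' : Kset s -> Kset s' -> IZR i <= t <= IZR i + 1 -> IZR i <= t' <= IZR i + 1 ->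
  dist2 (G s t) (G s' t') <= IZR (Z.abs (startv (s 0%Z) - startv (s' 0%Z))) + 2 * IZR (Z.abs i) + 4.
Proof.
  intros HK HK' Ht Ht'.
  generalize (G_fst_bound s i t HK Ht) (G_fst_bound s' i t' HK' Ht') (G_snd_bound s t) (G_snd_bound s' t').
  intros A1 A2 A3 A4. rewrite abs_IZR, minus_IZR.
  eapply Rle_trans. apply dist2_le.
  generalize (tri3 (fst (G s t)) (fst (G s' t')) (IZR (startv (s 0%Z))) (IZR (startv (s' 0%Z)))).
  generalize (tri2 (snd (G s t)) (snd (G s' t'))).
  rewrite (Rabs_minus_sym (IZR (startv (s' 0%Z))) (fst (G s' t'))). lra.
Qed.

Definition Tterm (s s' : Z -> Z) (i : Z) : R :=
  (/ 2) ^ (Z.abs_nat i) * dH (seg (G s) i) (seg (G s') i).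

Lemma seg_G_mem s i t : IZR i <= t <= IZR i + 1 -> seg (G s) i (G s t).
Proof. intros. exists t; split; auto. Qed.

Lemma Tterm_bounds s s' i : Kset s -> Kset s' ->
  let D := IZR (Z.abs (startv (s 0%Z) - startv (s' 0%Z))) in
  0 <= Tterm s s' i <= (D + 4) * INR (S (Z.abs_nat i)) * (/ 2) ^ (Z.abs_nat i).
Proof.
  intros HK HK' D.
  assert (HD : 0 <= D) by (apply IZR_le; lia).
  assert (Bx : forall t t', IZR i <= t <= IZR i + 1 -> IZR i <= t' <= IZR i + 1 ->
     dist2 (G s t) (G s' t') <= D + 2 * IZR (Z.abs i) + 4 /\ dist2 (G s' t') (G s t) <= D + 2 * IZR (Z.abs i) + 4).
  { intros t t' Ht Ht'. rewrite (dist2_sym (G s' t')). unfold D. split; apply G_pair_bound; auto. }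
  assert (Hi : IZR i <= IZR i <= IZR i + 1) by lra.
  assert (HM : forall a b, seg (G s) i a -> seg (G s') i b ->
     dist2 a b <= D + 2 * IZR (Z.abs i) + 4 /\ dist2 b a <= D + 2 * IZR (Z.abs i) + 4).
  { intros a b [t [Ht ->]] [t' [Ht' ->]]. auto. }
  assert (P2 : 0 < (/ 2) ^ Z.abs_nat i) by (apply pow_lt; lra).
  unfold Tterm. split.
  - apply Rmult_le_pos. lra. eapply dH_nonneg. apply (seg_G_mem s i (IZR i) Hi). apply (seg_G_mem s' i (IZR i) Hi). exact HM.
  - assert (dH (seg (G s) i) (seg (G s') i) <= D + 2 * IZR (Z.abs i) + 4).
    { apply (dH_upper _ _ (G s (IZR i)) (G s' (IZR i))). apply seg_G_mem; auto. apply seg_G_mem; auto.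
      - intros a [t [Ht ->]]. exists (G s' t). split. apply seg_G_mem; auto. apply Bx; auto.
      - intros b [t [Ht ->]]. exists (G s t). split. apply seg_G_mem; auto. apply Bx; auto. }
    rewrite IZR_abs_nat in H. rewrite S_INR.
    assert (0 <= INR (Z.abs_nat i)) by apply pos_INR.
    assert (H2 : D + 2 * INR (Z.abs_nat i) + 4 <= (D + 4) * (INR (Z.abs_nat i) + 1)) by nra.
    rewrite Rmult_comm. apply Rmult_le_compat_r; lra.
Qed.

Lemma Tterm_zero s s' i : Kset s -> Kset s' -> s i = s' i -> Tterm s s' i = 0.
Proof.
  intros HK HK' E.
  assert (Hi : IZR i <= IZR i <= IZR i + 1) by lra.
  assert (EG : forall t, IZR i <= t <= IZR i + 1 -> G s t = G s' t).
  { intros t Ht. rewrite (G_seg s HK i t Ht), (G_seg s' HK' i t Ht), E. reflexivity. }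
  assert (dH (seg (G s) i) (seg (G s') i) <= 0).
  { apply (dH_upper _ _ (G s (IZR i)) (G s' (IZR i))). apply seg_G_mem; auto. apply seg_G_mem; auto.
    - intros a [t [Ht ->]]. exists (G s' t). split. apply seg_G_mem; auto. rewrite EG, dist2_refl by auto. lra.
    - intros b [t [Ht ->]]. exists (G s t). split. apply seg_G_mem; auto. rewrite EG, dist2_refl by auto. lra. }
  destruct (Tterm_bounds s s' i HK HK') as [H0 _]. unfold Tterm in *.
  assert (0 < (/ 2) ^ Z.abs_nat i) by (apply pow_lt; lra). nra.
Qed.

Lemma Tterm_sep s s' i : Kset s -> Kset s' -> s i <> s' i -> (/ 2) ^ (Z.abs_nat i) * / 2 <= Tterm s s' i.
Proof.
  intros HK HK' NE. unfold Tterm. apply Rmult_le_compat_l. left; apply pow_lt; lra.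
  assert (Hi : IZR i <= IZR i <= IZR i + 1) by lra.
  assert (Hm : IZR i <= IZR i + / 2 <= IZR i + 1) by lra.
  destruct (Tterm_bounds s s' i HK HK') as [_ _].
  eapply (dH_lower _ _ (G s (IZR i)) (G s' (IZR i))). apply seg_G_mem; auto. apply seg_G_mem; auto.
  2: apply (seg_G_mem s i _ Hm).
  - intros a b [t [Ht ->]] [t' [Ht' ->]]. rewrite (dist2_sym (G s' t')).
    instantiate (1 := IZR (Z.abs (startv (s 0%Z) - startv (s' 0%Z))) + 2 * IZR (Z.abs i) + 4).
    split; apply G_pair_bound; auto.
  - intros b [t [Ht ->]]. rewrite (G_seg s HK i _ Hm), (G_seg s' HK' i t Ht).
    replace (IZR i + / 2 - IZR i) with (/ 2) by ring. apply pos_sep; auto. lra.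
Qed.

Definition Dterm (x y : Z -> Z) (j : Z) : R := IZR (Z.abs (x j - y j)) / 2 ^ (Z.abs_nat j).

Lemma Dterm_bounds x y j : Theta_inf x -> Theta_inf y ->
  0 <= Dterm x y j <= (IZR (Z.abs (x 0%Z - y 0%Z)) + 4) * INR (S (Z.abs_nat j)) * (/ 2) ^ (Z.abs_nat j).
Proof.
  intros Hx Hy. generalize (drift x 2 Hx j) (drift y 2 Hy j). intros D1 D2.
  assert (B : (Z.abs (x j - y j) <= Z.abs (x 0%Z - y 0%Z) + 4 * Z.abs j)%Z) by lia.
  apply IZR_le in B. rewrite plus_IZR, mult_IZR, (IZR_abs_nat j) in B.
  unfold Dterm. unfold Rdiv. rewrite <- pow_inv. rewrite S_INR.
  assert (0 < (/ 2) ^ Z.abs_nat j) by (apply pow_lt; lra).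
  assert (0 <= IZR (Z.abs (x j - y j))) by (apply IZR_le; lia).
  assert (0 <= IZR (Z.abs (x 0%Z - y 0%Z))) by (apply IZR_le; lia).
  assert (0 <= INR (Z.abs_nat j)) by apply pos_INR.
  split. nra.
  assert (IZR (Z.abs (x j - y j)) <= (IZR (Z.abs (x 0%Z - y 0%Z)) + 4) * (INR (Z.abs_nat j) + 1)) by nra.
  apply Rmult_le_compat_r; lra.
Qed.

Lemma small_int z k N : IZR (Z.abs z) * (/ 2) ^ k < (/ 2) ^ N * / 2 -> (k <= N)%nat -> z = 0%Z.
Proof.
  intros H L. generalize (half_pow_mono k N L). intros M.
  assert (0 < (/ 2) ^ N) by (apply pow_lt; lra).
  assert (0 <= IZR (Z.abs z)) by (apply IZR_le; lia).
  assert (IZR (Z.abs z) < 1) by nra. apply lt_IZR in H2. lia.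
Qed.
Lemma Omega_data g : Omega_inf g -> exists s psi, Kset s /\ 0 <= psi < 1 /\
  (forall t, g t = G s (t + psi)) /\ hmap g = s /\ rep g = G s.
Proof.
  intros Hg. destruct (repr g Hg) as [s [psi [HK [Hp Hgs]]]].
  exists s, psi. repeat split; auto; try lra.
  apply (hmap_spec s psi); auto. apply (rep_G g s psi); auto.
Qed.

Lemma choose_N eps : eps > 0 -> exists N, 64 * (3 / 4) ^ N < eps.
Proof.
  intros He. destruct (pow_lt_1_zero (3 / 4)) with (y := eps / 64) as [N HN].
  rewrite Rabs_pos_eq; lra. lra.
  exists N. specialize (HN N (le_n N)). rewrite Rabs_pos_eq in HN. lra.
  left; apply pow_lt; lra.
Qed.

Lemma Dterm_small x y j N : Dterm x y j < (/ 2) ^ N * / 2 -> (Z.abs_nat j <= N)%nat -> x j = y j.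
Proof.
  intros H L. unfold Dterm, Rdiv in H. rewrite <- pow_inv in H.
  generalize (small_int _ _ _ H L). lia.
Qed.

Lemma Dterm_eq0 x y j : x j = y j -> Dterm x y j = 0.
Proof. intros E. unfold Dterm. rewrite E, Z.sub_diag. simpl. unfold Rdiv. ring. Qed.

Lemma Kset_shift s : Kset s -> Kset (sigma_shift s).
Proof. intros HK j. unfold sigma_shift. rewrite HK. reflexivity. Qed.

Lemma delta_pos N : (/ 2) ^ N * / 2 > 0.
Proof. apply Rmult_lt_0_compat. apply pow_lt; lra. lra. Qed.

Theorem theoremA :
  invariant Xinf Yinf Lambda_inf /\
  exists (K : (Z -> Z) -> Prop) (h : (R -> pt) -> (Z -> Z)),
    subshift K /\
    (* h is well defined on classes and injective on classes *)
    (forall g1 g2, Omega_inf g1 -> Omega_inf g2 ->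
       (h g1 = h g2 <-> itin_equiv g1 g2)) /\
    (* h maps onto K *)
    (forall g, Omega_inf g -> K (h g)) /\
    (forall x, K x -> exists g, Omega_inf g /\ h g = x) /\
    (* h is continuous from (Omega_bar, rho) to (K, d) *)
    (forall g, Omega_inf g -> forall eps, eps > 0 -> exists delta, delta > 0 /\
       forall g', Omega_inf g' -> rho_inf g g' < delta -> dTheta (h g) (h g') < eps) /\
    (* h^{-1} is continuous from (K, d) to (Omega_bar, rho) *)
    (forall g, Omega_inf g -> forall eps, eps > 0 -> exists delta, delta > 0 /\
       forall g', Omega_inf g' -> dTheta (h g) (h g') < delta -> rho_inf g g' < eps) /\
    (* conjugacy: h o T1_bar = sigma o h *)
    (forall g, Omega_inf g -> h (T1 g) = sigma_shift (h g)).
Proof.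
  split. exact invariance.
  exists Kset, hmap.
  split; [|split; [|split; [|split; [|split; [|split]]]]].
  -
    split; [|split; [|split]].
    + exact K_theta.
    + intros x Hx Hc j.
      set (N := (Z.abs_nat j + Z.abs_nat (j + 1))%nat).
      destruct (Hc _ (delta_pos N)) as [y [Hy Hd]].
      assert (HyT := K_theta y Hy).
      destruct (sumZ_tools (Dterm x y) (IZR (Z.abs (x 0%Z - y 0%Z)) + 4)) as [Ti _].
      { assert (0 <= IZR (Z.abs (x 0%Z - y 0%Z))) by (apply IZR_le; lia). lra. }
      { intros i. apply Dterm_bounds; auto. }
      change (dTheta x y) with (sumZ (Dterm x y)) in Hd.
      assert (E1 : x j = y j) by (apply (Dterm_small x y j N); [generalize (Ti j); lra | unfold N; lia]).
      assert (E2 : x (j + 1)%Z = y (j + 1)%Z) by (apply (Dterm_small x y (j + 1) N); [generalize (Ti (j + 1)%Z); lra | unfold N; lia]).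
      rewrite E1, E2. apply Hy.
    + exact Kset_shift.
    + intros x Hx. exists (fun j => x (j - 1)%Z). split.
      * intros j. rewrite Hx. f_equal. f_equal. lia.
      * apply functional_extensionality. intros j. unfold sigma_shift. f_equal. lia.
  -
    intros g1 g2 H1 H2.
    destruct (Omega_data g1 H1) as [s1 [p1 [HK1 [Hp1 [Hg1 [Hh1 _]]]]]].
    destruct (Omega_data g2 H2) as [s2 [p2 [HK2 [Hp2 [Hg2 [Hh2 _]]]]]].
    destruct (itin_G s1 p1 g1 HK1 Hp1 Hg1) as [I1 U1].
    destruct (itin_G s2 p2 g2 HK2 Hp2 Hg2) as [I2 U2].
    rewrite Hh1, Hh2. split.
    + intros E. exists s1. split; auto. rewrite E; auto.
    + intros [s [J1 J2]]. rewrite <- (U1 s J1), <- (U2 s J2). reflexivity.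
  - intros g Hg. destruct (Omega_data g Hg) as [s [p [HK [_ [_ [Hh _]]]]]]. rewrite Hh; auto.
  - intros x Hx. exists (G x). split. apply G_Omega; auto.
    apply (hmap_spec x 0); auto. lra. intros t. f_equal. ring.
  -
    intros g Hg eps Heps.
    destruct (Omega_data g Hg) as [s [p [HK [Hp [Hgs [Hh Hr]]]]]].
    destruct (choose_N eps Heps) as [N HN].
    exists ((/ 2) ^ N * / 2). split. apply delta_pos.
    intros g' Hg' Hrho.
    destruct (Omega_data g' Hg') as [s' [p' [HK' [Hp' [Hgs' [Hh' Hr']]]]]].
    rewrite Hh, Hh'.
    unfold rho_inf in Hrho. rewrite Hr, Hr' in Hrho.
    change (sumZ (fun i => (/ 2) ^ Z.abs_nat i * dH (seg (G s) i) (seg (G s') i))) with (sumZ (Tterm s s')) in Hrho.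
    set (D := IZR (Z.abs (startv (s 0%Z) - startv (s' 0%Z)))).
    assert (HD : 0 <= D) by (apply IZR_le; lia).
    destruct (sumZ_tools (Tterm s s') (D + 4)) as [Ti _]. lra.
    { intros i. apply Tterm_bounds; auto. }
    assert (Heq : forall i, (Z.abs_nat i <= N)%nat -> s i = s' i).
    { intros i Hi. destruct (Z.eq_dec (s i) (s' i)) as [|NE]; auto. exfalso.
      generalize (Tterm_sep s s' i HK HK' NE) (Ti i) (half_pow_mono _ _ Hi). lra. }
    destruct (sumZ_tools (Dterm s s') (IZR (Z.abs (s 0%Z - s' 0%Z)) + 4)) as [_ Tl].
    { assert (0 <= IZR (Z.abs (s 0%Z - s' 0%Z))) by (apply IZR_le; lia). lra. }
    { intros i. apply Dterm_bounds; apply K_theta; auto. }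
    change (dTheta s s') with (sumZ (Dterm s s')).
    assert (Z0 : s 0%Z = s' 0%Z) by (apply Heq; simpl; lia).
    specialize (Tl N (fun i Hi => Dterm_eq0 s s' i (Heq i Hi))).
    rewrite Z0, Z.sub_diag in Tl. simpl in Tl. lra.
  -
    intros g Hg eps Heps.
    destruct (Omega_data g Hg) as [s [p [HK [Hp [Hgs [Hh Hr]]]]]].
    destruct (choose_N eps Heps) as [N HN].
    exists ((/ 2) ^ N * / 2). split. apply delta_pos.
    intros g' Hg' Hd.
    destruct (Omega_data g' Hg') as [s' [p' [HK' [Hp' [Hgs' [Hh' Hr']]]]]].
    rewrite Hh, Hh' in Hd.
    change (dTheta s s') with (sumZ (Dterm s s')) in Hd.
    destruct (sumZ_tools (Dterm s s') (IZR (Z.abs (s 0%Z - s' 0%Z)) + 4)) as [Ti _].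
    { assert (0 <= IZR (Z.abs (s 0%Z - s' 0%Z))) by (apply IZR_le; lia). lra. }
    { intros i. apply Dterm_bounds; apply K_theta; auto. }
    assert (Heq : forall i, (Z.abs_nat i <= N)%nat -> s i = s' i).
    { intros i Hi. apply (Dterm_small s s' i N); auto. generalize (Ti i); lra. }
    unfold rho_inf. rewrite Hr, Hr'.
    change (sumZ (fun i => (/ 2) ^ Z.abs_nat i * dH (seg (G s) i) (seg (G s') i))) with (sumZ (Tterm s s')).
    destruct (sumZ_tools (Tterm s s') (IZR (Z.abs (startv (s 0%Z) - startv (s' 0%Z))) + 4)) as [_ Tl].
    { assert (0 <= IZR (Z.abs (startv (s 0%Z) - startv (s' 0%Z)))) by (apply IZR_le; lia). lra. }
    { intros i. apply Tterm_bounds; auto. }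
    assert (Z0 : s 0%Z = s' 0%Z) by (apply Heq; simpl; lia).
    specialize (Tl N (fun i Hi => Tterm_zero s s' i HK HK' (Heq i Hi))).
    rewrite Z0, Z.sub_diag in Tl. simpl in Tl. lra.
  -
    intros g Hg. destruct (Omega_data g Hg) as [s [p [HK [Hp [Hgs [Hh _]]]]]].
    rewrite Hh. apply (hmap_spec (sigma_shift s) p). apply Kset_shift; auto. auto.
    intros t. unfold T1. rewrite Hgs. replace (t + 1 + p) with ((t + p) + 1) by ring. apply G_shift1.
Qed.
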